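(* Let $\beta>0$, $\mu>0$, $0<p<1$, and $\delta=\beta/\mu$. Consider the permanent adoption model $$S_0'=\mu-\beta S_0A-\mu S_0,\qquad S_1'=(1-p)\beta S_0A-\beta S_1A-\mu S_1,\qquad A'=\beta(pS_0+S_1)A-\mu A$$ on the simplex $\{S_0,S_1,A\ge0,\ S_0+S_1+A=1\}$. Let $E_0=(1,0,0)$ be the contagion-free equilibrium, and let $$A_{1,2}=\tfrac12\Big[1-2\delta^{-1}\pm\sqrt{1-4(1-p)\delta^{-1}}\Big]$$ ($+$ for $A_1$, $-$ for $A_2$). For $i=1,2$, whenever $A_i$ is real and positive, let $E_i$ be the point with $A=A_i$, $S_0=1/(\delta A_i+1)$, $S_1=1-S_0-A_i$; the equilibria of the system with $A>0$ (endemic equilibria) are exactly these points. Then: (I) If $p<\tfrac12$: - for $\delta<4(1-p)$ there are no endemic equilibria, and $E_0$ is locally asymptotically stable; - for $4(1-p)<\delta<\tfrac1p$ there are exactly two endemic equilibria $E_1,E_2$, with $E_1$ locally asymptotically stable and $E_2$ unstable, and $E_0$ is locally asymptotically stable; - for $\delta\ge\tfrac1p$ there is a unique endemic equilibrium $E_1$, which is locally asymptotically stable; moreover for $\delta>\tfrac1p$ the equilibrium $E_0$ is unstable. (II) If $p\ge\tfrac12$: - for $\delta\le\tfrac1p$ there is no endemic equilibrium, and for $\delta<\tfrac1p$ the equilibrium $E_0$ is locally asymptotically stable; - for $\delta>\tfrac1p$ there is a unique endemic equilibrium $E_1$, which is locally asymptotically stable, and $E_0$ is unstable.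
   Context: $S_0,S_1,A$ are the fractions of naive, informed and adopter individuals in a population of constant size; $\beta$ is the effective contact rate, $\mu$ the per capita demographic turnover rate, $p$ the probability of adoption on first effective contact with an adopter. $\delta=\beta/\mu$ is called the contact parameter. *)

(* Defs.v *)
From Stdlib Require Import Reals Lra.
Open Scope R_scope.

Definition pt : Type := (R * R * R)%type.
Definition pS0 (x : pt) : R := fst (fst x).
Definition pS1 (x : pt) : R := snd (fst x).
Definition pA  (x : pt) : R := snd x.

Definition f0 (beta mu p : R) (s0 s1 a : R) : R := mu - beta * s0 * a - mu * s0.
Definition f1 (beta mu p : R) (s0 s1 a : R) : R :=
  (1 - p) * beta * s0 * a - beta * s1 * a - mu * s1.
Definition f2 (beta mu p : R) (s0 s1 a : R) : R :=
  beta * (p * s0 + s1) * a - mu * a.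

Definition in_simplex (x : pt) : Prop :=
  0 <= pS0 x /\ 0 <= pS1 x /\ 0 <= pA x /\ pS0 x + pS1 x + pA x = 1.

Definition is_equilibrium (beta mu p : R) (x : pt) : Prop :=
  f0 beta mu p (pS0 x) (pS1 x) (pA x) = 0 /\
  f1 beta mu p (pS0 x) (pS1 x) (pA x) = 0 /\
  f2 beta mu p (pS0 x) (pS1 x) (pA x) = 0.

Definition endemic (beta mu p : R) (x : pt) : Prop :=
  in_simplex x /\ 0 < pA x /\ is_equilibrium beta mu p x.

Definition dist3 (x y : pt) : R :=
  Rmax (Rabs (pS0 x - pS0 y)) (Rmax (Rabs (pS1 x - pS1 y)) (Rabs (pA x - pA y))).

Definition solution (beta mu p : R) (x0 x1 x2 : R -> R) : Prop :=
  forall t, 0 <= t ->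
    derivable_pt_lim x0 t (f0 beta mu p (x0 t) (x1 t) (x2 t)) /\
    derivable_pt_lim x1 t (f1 beta mu p (x0 t) (x1 t) (x2 t)) /\
    derivable_pt_lim x2 t (f2 beta mu p (x0 t) (x1 t) (x2 t)).

Definition traj (x0 x1 x2 : R -> R) (t : R) : pt := (x0 t, x1 t, x2 t).

Definition lyap_stable (beta mu p : R) (E : pt) : Prop :=
  forall eps, 0 < eps -> exists d, 0 < d /\
    forall x0 x1 x2 : R -> R, solution beta mu p x0 x1 x2 ->
      in_simplex (traj x0 x1 x2 0) -> dist3 (traj x0 x1 x2 0) E < d ->
      forall t, 0 <= t -> dist3 (traj x0 x1 x2 t) E < eps.

Definition loc_attractive (beta mu p : R) (E : pt) : Prop :=
  exists d, 0 < d /\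
    forall x0 x1 x2 : R -> R, solution beta mu p x0 x1 x2 ->
      in_simplex (traj x0 x1 x2 0) -> dist3 (traj x0 x1 x2 0) E < d ->
      forall eps, 0 < eps -> exists T, forall t, T <= t ->
        dist3 (traj x0 x1 x2 t) E < eps.

Definition loc_asym_stable (beta mu p : R) (E : pt) : Prop :=
  lyap_stable beta mu p E /\ loc_attractive beta mu p E.

Definition unstable (beta mu p : R) (E : pt) : Prop := ~ lyap_stable beta mu p E.

Definition E0 : pt := (1, 0, 0).

Definition A_plus (delta p : R) : R :=
  / 2 * (1 - 2 / delta + sqrt (1 - 4 * (1 - p) / delta)).
Definition A_minus (delta p : R) : R :=
  / 2 * (1 - 2 / delta - sqrt (1 - 4 * (1 - p) / delta)).

Definition Epoint (delta a : R) : pt :=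
  let s0 := 1 / (delta * a + 1) in (s0, 1 - s0 - a, a).

(* Main.v *)
Require Import Defs.
From Stdlib Require Import Reals Lra Lia.
From Coquelicot Require Import Coquelicot.
Open Scope R_scope.

Lemma dpl_cont (f : R -> R) t l : derivable_pt_lim f t l -> continuity_pt f t.
Proof. intro H. apply derivable_continuous_pt. exists l. exact H. Qed.

Lemma cont_eps (f : R -> R) t : continuity_pt f t ->
  forall e, 0 < e -> exists d, 0 < d /\ forall s, Rabs (s - t) < d -> Rabs (f s - f t) < e.
Proof.
  intros H e he. destruct (H e he) as [d [hd H2]]. exists d. split; auto.
  intros s hs. destruct (Req_dec s t) as [->|ne].
  - rewrite Rminus_diag, Rabs_R0; lra.
  - apply (H2 s). split. split. exact I. auto. exact hs.
Qed.

Lemma nondecr (f f' : R -> R) :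
  (forall t, 0 <= t -> derivable_pt_lim f t (f' t)) ->
  (forall t, 0 <= t -> 0 <= f' t) -> forall a b, 0 <= a -> a <= b -> f a <= f b.
Proof.
  intros Hd Hp a b ha hab. destruct (Rle_lt_or_eq_dec _ _ hab) as [lt|eq].
  - destruct (MVT_cor2 f f' a b lt) as [c [Hc Hc2]].
    + intros c Hc; apply Hd; lra.
    + assert (0 <= f' c) by (apply Hp; lra). nra.
  - subst; lra.
Qed.

Lemma barrier (f f' : R -> R) (eps : R) : 0 < eps ->
  (forall t, 0 <= t -> derivable_pt_lim f t (f' t)) -> 0 <= f 0 ->
  (forall t, 0 <= t -> -eps < f t < 0 -> 0 <= f' t) -> forall t, 0 <= t -> 0 <= f t.
Proof.
  intros heps Hd H0 Hb t1 ht1. destruct (Rle_or_lt 0 (f t1)) as [ok|neg]; auto.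
  exfalso.
  set (E := fun t => 0 <= t <= t1 /\ 0 <= f t).
  assert (bE : bound E). { exists t1. intros x [hx _]. lra. }
  assert (nE : exists x, E x). { exists 0. split; lra. }
  destruct (completeness E bE nE) as [t0 [ub lub]].
  assert (h0 : 0 <= t0) by (apply ub; split; lra).
  assert (h1 : t0 <= t1). { apply lub. intros x [hx _]. lra. }
  assert (ft0 : 0 <= f t0).
  { destruct (Rle_or_lt 0 (f t0)) as [ok|ng]; auto. exfalso.
    destruct (cont_eps f t0 (dpl_cont f t0 (f' t0) (Hd t0 h0)) (- f t0) ltac:(lra)) as [d [hd Hd2]].
    assert (~ is_upper_bound E (t0 - d/2)).
    { intro H. specialize (lub _ H). lra. }
    apply H. intros x Ex. destruct (Rle_or_lt x (t0 - d/2)) as [l|l]; auto.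
    exfalso. assert (x <= t0) by (apply ub; auto).
    destruct Ex as [_ Ex]. specialize (Hd2 x).
    assert (Rabs (x - t0) < d) by (rewrite Rabs_left1; lra).
    specialize (Hd2 H2). assert (Rabs (f x - f t0) >= f x - f t0) by (apply Rle_ge, Rle_abs). lra. }
  assert (lt01 : t0 < t1). { destruct h1 as [l|e]; auto. subst. lra. }
  assert (neg2 : forall t, t0 < t <= t1 -> f t < 0).
  { intros t ht. destruct (Rle_or_lt 0 (f t)) as [p0|n]; auto.
    assert (t <= t0) by (apply ub; split; lra). lra. }
  destruct (cont_eps f t0 (dpl_cont f t0 (f' t0) (Hd t0 h0)) eps heps) as [d [hd Hd2]].
  set (t2 := Rmin t1 (t0 + d/2)).
  assert (t0 < t2) by (unfold t2; apply Rmin_glb_lt; lra).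
  assert (t2 <= t1) by (unfold t2; apply Rmin_l).
  assert (t2 <= t0 + d/2) by (unfold t2; apply Rmin_r).
  destruct (MVT_cor2 f f' t0 t2) as [c [Hc Hc2]]; auto.
  { intros c Hc; apply Hd; lra. }
  assert (fc : f c < 0) by (apply neg2; lra).
  assert (Rabs (f c - f t0) < eps) by (apply Hd2; rewrite Rabs_right; lra).
  assert (f c - f t0 > - eps).
  { assert (Rabs (f c - f t0) >= -(f c - f t0)) by (rewrite <- Rabs_Ropp; apply Rle_ge, Rle_abs). lra. }
  assert (0 <= f' c) by (apply Hb; lra).
  assert (f t2 < 0) by (apply neg2; lra). nra.
Qed.

Lemma dpl_eq f x l l' : derivable_pt_lim f x l -> l = l' -> derivable_pt_lim f x l'.
Proof. intros H ->; exact H. Qed.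
Lemma dpl_ext (f g : R -> R) x l : (forall s, f s = g s) -> derivable_pt_lim f x l -> derivable_pt_lim g x l.
Proof. intros He H. intros e he. destruct (H e he) as [d Hd]. exists d. intros h hh hd.
  rewrite <- !He. apply Hd; auto. Qed.
Lemma dpl_sub (f g : R -> R) x a b : derivable_pt_lim f x a -> derivable_pt_lim g x b ->
  derivable_pt_lim (fun s => f s - g s) x (a - b).
Proof. intros; apply derivable_pt_lim_minus; auto. Qed.
Lemma dpl_add (f g : R -> R) x a b : derivable_pt_lim f x a -> derivable_pt_lim g x b ->
  derivable_pt_lim (fun s => f s + g s) x (a + b).
Proof. intros; apply derivable_pt_lim_plus; auto. Qed.
Lemma dpl_mul (f g : R -> R) x a b : derivable_pt_lim f x a -> derivable_pt_lim g x b ->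
  derivable_pt_lim (fun s => f s * g s) x (a * g x + f x * b).
Proof. intros; apply derivable_pt_lim_mult; auto. Qed.
Lemma dpl_const (c : R) x : derivable_pt_lim (fun _ => c) x 0.
Proof. apply derivable_pt_lim_const. Qed.
Lemma dpl_opp (f : R -> R) x a : derivable_pt_lim f x a -> derivable_pt_lim (fun s => - f s) x (- a).
Proof. intros; apply derivable_pt_lim_opp; auto. Qed.
Lemma dpl_sq (f : R -> R) x l : derivable_pt_lim f x l -> derivable_pt_lim (fun s => f s ^ 2) x (2 * f x * l).
Proof. intro H. apply (dpl_ext (fun s => f s * f s)). intro; ring.
  eapply dpl_eq. apply dpl_mul; eauto. ring. Qed.
Lemma dpl_scal (f : R -> R) c x l : derivable_pt_lim f x l -> derivable_pt_lim (fun s => c * f s) x (c * l).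
Proof. intro H. eapply dpl_eq. apply (dpl_mul (fun _ => c) f). apply dpl_const. eauto. ring. Qed.

Lemma dpl_mul_exp (V : R -> R) t l k :
  derivable_pt_lim V t l ->
  derivable_pt_lim (fun s => V s * exp (k * s)) t (l * exp (k * t) + V t * (k * exp (k * t))).
Proof.
  intro H. apply is_derive_Reals.
  apply (is_derive_mult V (fun s => exp (k * s))).
  - apply is_derive_Reals; exact H.
  - auto_derive; auto. ring.
  - intros; apply Rmult_comm.
Qed.

Lemma exp_ge1 x : 0 <= x -> 1 + x <= exp x.
Proof. intro h. destruct (Req_dec x 0) as [->|n]. rewrite exp_0; lra. left; apply exp_ineq1; auto. Qed.

Lemma decay (V V' : R -> R) r k : 0 < k ->
  (forall t, 0 <= t -> derivable_pt_lim V t (V' t)) ->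
  (forall t, 0 <= t -> 0 <= V t) ->
  (forall t, 0 <= t -> V t <= r -> V' t <= - k * V t) -> V 0 < r ->
  forall t, 0 <= t -> V t <= V 0 /\ V t * (1 + k * t) <= V 0.
Proof.
  intros hk Hd Hp Hb H0.
  set (r' := (V 0 + r) / 2).
  assert (Hr : forall t, 0 <= t -> 0 <= r' - V t).
  { apply (barrier (fun t => r' - V t) (fun t => - V' t) (r - r')).
    - unfold r'; lra.
    - intros t ht. eapply dpl_eq. apply dpl_sub. apply dpl_const. auto. ring.
    - unfold r'; lra.
    - intros t ht hh. assert (V' t <= - k * V t) by (apply Hb; lra).
      assert (0 <= V t) by auto. nra. }
  assert (HW : forall t, 0 <= t -> V t * exp (k * t) <= V 0 * exp (k * 0)).
  { intros t ht.
    assert (forall a b, 0 <= a -> a <= b -> - (V a * exp (k * a)) <= - (V b * exp (k * b))).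
    { apply (nondecr _ (fun s => - (V' s * exp (k * s) + V s * (k * exp (k * s))))).
      - intros s hs. apply dpl_opp. apply dpl_mul_exp; auto.
      - intros s hs. assert (V' s <= - k * V s) by (apply Hb; auto; specialize (Hr s hs); unfold r' in *; lra).
        assert (0 < exp (k * s)) by apply exp_pos. nra. }
    specialize (H 0 t (Rle_refl 0) ht). cbv beta in H. lra. }
  intros t ht. specialize (HW t ht). rewrite Rmult_0_r, exp_0, Rmult_1_r in HW.
  assert (1 + k * t <= exp (k * t)) by (apply exp_ge1; nra).
  assert (0 <= V t) by auto.
  assert (V t * (1 + k * t) <= V t * exp (k * t)) by (apply Rmult_le_compat_l; auto).
  assert (0 <= V t * (k * t)) by (apply Rmult_le_pos; auto; nra).
  split; nra.
Qed.

Lemma growth (V V' : R -> R) k : 0 < k ->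
  (forall t, 0 <= t -> derivable_pt_lim V t (V' t)) ->
  (forall t, 0 <= t -> k * V t <= V' t) -> 0 < V 0 ->
  forall t, 0 <= t -> V 0 * (1 + k * t) <= V t.
Proof.
  intros hk Hd Hb H0 t ht.
  assert (forall a b, 0 <= a -> a <= b -> V a * exp (-k * a) <= V b * exp (-k * b)).
  { apply (nondecr _ (fun s => V' s * exp (-k * s) + V s * (-k * exp (-k * s)))).
    - intros s hs. apply dpl_mul_exp; auto.
    - intros s hs. specialize (Hb s hs). assert (0 < exp (-k * s)) by apply exp_pos.
      replace (V' s * exp (- k * s) + V s * (- k * exp (- k * s))) with ((V' s - k * V s) * exp (-k*s)) by ring.
      apply Rmult_le_pos; lra. }
  specialize (H 0 t (Rle_refl 0) ht). rewrite Rmult_0_r, exp_0, Rmult_1_r in H.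
  assert (1 + k * t <= exp (k * t)) by (apply exp_ge1; nra).
  assert (Hee : exp (-k * t) * exp (k * t) = 1).
  { rewrite <- exp_plus. replace (-k * t + k * t) with 0 by ring. apply exp_0. }
  assert (0 < exp (k*t)) by apply exp_pos.
  assert (V 0 <= V t * exp (-k * t)) by lra.
  assert (V 0 * exp (k*t) <= V t * exp (-k * t) * exp (k*t)) by (apply Rmult_le_compat_r; lra).
  assert (V t * exp (-k * t) * exp (k*t) = V t) by (rewrite Rmult_assoc, Hee; ring).
  assert (V 0 * (1 + k*t) <= V 0 * exp (k*t)) by (apply Rmult_le_compat_l; lra).
  lra.
Qed.

Lemma sum_inv (beta mu p : R) x0 x1 x2 : solution beta mu p x0 x1 x2 ->
  x0 0 + x1 0 + x2 0 = 1 -> forall t, 0 <= t -> x0 t + x1 t + x2 t = 1.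
Proof.
  intros Hs H0.
  set (W := fun s => (x0 s + x1 s + x2 s - 1) * exp (mu * s)).
  assert (Hd : forall s, 0 <= s -> derivable_pt_lim W s 0).
  { intros s hs. destruct (Hs s hs) as [d0 [d1 d2]].
    assert (derivable_pt_lim (fun s => x0 s + x1 s + x2 s - 1) s
      (f0 beta mu p (x0 s) (x1 s) (x2 s) + f1 beta mu p (x0 s) (x1 s) (x2 s) + f2 beta mu p (x0 s) (x1 s) (x2 s) - 0)).
    { apply dpl_sub. 2: apply dpl_const.
      apply dpl_add; auto. apply dpl_add; auto. }
    pose proof (dpl_mul_exp _ s _ mu H). unfold W.
    match goal with H : derivable_pt_lim _ s ?l |- _ => replace 0 with l; [exact H|] end.
    unfold f0, f1, f2; ring. }
  intros t ht.
  assert (W 0 <= W t) by (apply (nondecr W (fun _ => 0)); auto; intros; lra).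
  assert (- W 0 <= - W t).
  { apply (nondecr (fun s => - W s) (fun _ => 0)); auto; try (intros; lra).
    intros s hs. eapply dpl_eq. apply dpl_opp; auto. ring. }
  unfold W in *. rewrite Rmult_0_r, exp_0, H0 in *.
  assert (0 < exp (mu*t)) by apply exp_pos.
  assert ((x0 t + x1 t + x2 t - 1) * exp (mu * t) = 0) by lra.
  apply Rmult_integral in H3. destruct H3; lra.
Qed.

Lemma bounded_growth (V V' : R -> R) k B : 0 < k ->
  (forall t, 0 <= t -> derivable_pt_lim V t (V' t)) ->
  (forall t, 0 <= t -> k * V t <= V' t) -> (forall t, 0 <= t -> V t <= B) -> V 0 <= 0.
Proof.
  intros hk Hd Hb HB. destruct (Rle_or_lt (V 0) 0) as [h|h]; auto. exfalso.
  assert (hB : V 0 <= B) by (apply HB; lra).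
  set (t := B / (V 0 * k)).
  assert (ht : 0 <= t) by (unfold t; apply Rdiv_le_0_compat; nra).
  pose proof (growth V V' k hk Hd Hb h t ht).
  specialize (HB t ht).
  assert (V 0 * (k * t) = B) by (unfold t; field; lra). nra.
Qed.

Lemma quad_bound P Rr T x y : 0 < P -> 0 < T -> 0 < 4 * P * T - Rr ^ 2 ->
  - P * x ^ 2 - Rr * x * y - T * y ^ 2 <= - ((4 * P * T - Rr ^ 2) / (4 * (P + T))) * (x ^ 2 + y ^ 2).
Proof.
  intros hP hT hD. set (l := (4 * P * T - Rr ^ 2) / (4 * (P + T))).
  assert (hl : l * (4 * (P + T)) = 4 * P * T - Rr ^ 2) by (unfold l; field; lra).
  assert (0 < l) by (unfold l; apply Rdiv_lt_0_compat; lra).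
  assert (l < P).
  { apply Rmult_lt_reg_r with (4 * (P + T)). lra. rewrite hl. nra. }
  assert (4 * (P - l) * (T - l) >= Rr ^ 2).
  { replace (4 * (P - l) * (T - l)) with (4 * P * T - l * (4 * (P + T)) + 4 * l ^ 2) by ring.
    rewrite hl. nra. }
  assert (0 <= (P - l) * ((P - l) * x ^ 2 + Rr * x * y + (T - l) * y ^ 2)).
  { replace ((P - l) * ((P - l) * x ^ 2 + Rr * x * y + (T - l) * y ^ 2)) with
      (((P - l) * x + Rr / 2 * y) ^ 2 + ((P - l) * (T - l) - Rr ^ 2 / 4) * y ^ 2) by (field).
    assert (0 <= ((P - l) * (T - l) - Rr ^ 2 / 4) * y ^ 2) by (apply Rmult_le_pos; nra).
    pose proof (pow2_ge_0 ((P - l) * x + Rr / 2 * y)). lra. }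
  assert (0 <= (P - l) * x ^ 2 + Rr * x * y + (T - l) * y ^ 2).
  { destruct (Rle_or_lt 0 ((P - l) * x ^ 2 + Rr * x * y + (T - l) * y ^ 2)); auto.
    assert ((P - l) * ((P - l) * x ^ 2 + Rr * x * y + (T - l) * y ^ 2) < 0) by (apply Rmult_pos_neg; lra). lra. }
  replace (- (l * (x ^ 2 + y ^ 2))) with (- l * (x^2 + y^2)) by ring. nra.
Qed.

Lemma tb c w u rho : 0 <= w -> Rabs u <= rho -> - (c * w * u) <= Rabs c * w * rho.
Proof.
  intros hw hu. apply Rle_trans with (Rabs (c * w * u)). rewrite <- Rabs_Ropp; apply Rle_abs.
  rewrite !Rabs_mult, (Rabs_right w) by lra. apply Rmult_le_compat_l. apply Rmult_le_pos; auto. apply Rabs_pos. auto.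
Qed.

Lemma sq_abs x r : 0 <= r -> x ^ 2 <= r ^ 2 -> Rabs x <= r.
Proof. intros hr h. destruct (Rle_or_lt (Rabs x) r); auto. rewrite <- pow2_abs in h. nra. Qed.

Lemma stab2 (al b k1 c e k2 k3 a : R) : 0 < a -> 0 < al -> 0 < e ->
  0 < 4 * a * al * e - (a * b + c) ^ 2 ->
  exists r k, 0 < r /\ 0 < k /\ forall X Y : R -> R,
   (forall t, 0 <= t -> derivable_pt_lim X t (- al * X t - b * Y t - k1 * X t * Y t) /\
                        derivable_pt_lim Y t (- c * X t - e * Y t - Y t * (k2 * X t + k3 * Y t))) ->
   a * X 0 ^ 2 + Y 0 ^ 2 < r ->
   forall t, 0 <= t -> a * X t ^ 2 + Y t ^ 2 <= a * X 0 ^ 2 + Y 0 ^ 2 /\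
     (a * X t ^ 2 + Y t ^ 2) * (1 + k * t) <= a * X 0 ^ 2 + Y 0 ^ 2.
Proof.
  intros ha hal he hD.
  set (P := a * al). set (Rr := a * b + c).
  set (l := (4 * P * e - Rr ^ 2) / (4 * (P + e))).
  assert (hP : 0 < P) by (unfold P; nra).
  assert (hl : 0 < l) by (unfold l; apply Rdiv_lt_0_compat; unfold P, Rr in *; nra).
  set (K := Rabs (a * k1) + Rabs k2 + Rabs k3).
  assert (hK : 0 <= K) by (unfold K; pose proof (Rabs_pos (a*k1)); pose proof (Rabs_pos k2); pose proof (Rabs_pos k3); lra).
  set (rho := Rmin 1 (l / (2 * (K + 1)))).
  assert (hrho : 0 < rho) by (unfold rho; apply Rmin_glb_lt; [lra| apply Rdiv_lt_0_compat; lra]).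
  assert (hrho1 : rho <= 1) by apply Rmin_l.
  assert (hrho2 : rho * (2 * (K + 1)) <= l).
  { assert (rho <= l / (2 * (K + 1))) by apply Rmin_r.
    apply Rmult_le_compat_r with (r := 2 * (K+1)) in H; [|lra].
    replace (l / (2 * (K + 1)) * (2 * (K + 1))) with l in H by (field; lra). exact H. }
  exists (Rmin a 1 * rho ^ 2), (l / (a + 1)).
  split. { apply Rmult_lt_0_compat. apply Rmin_glb_lt; lra. nra. }
  split. { apply Rdiv_lt_0_compat; lra. }
  intros X Y HXY H0.
  set (V := fun t => a * X t ^ 2 + Y t ^ 2).
  set (V' := fun t => 2 * a * X t * (- al * X t - b * Y t - k1 * X t * Y t) +
                      2 * Y t * (- c * X t - e * Y t - Y t * (k2 * X t + k3 * Y t))).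
  assert (Hd : forall t, 0 <= t -> derivable_pt_lim V t (V' t)).
  { intros t ht. destruct (HXY t ht) as [dX dY]. unfold V, V'.
    eapply dpl_eq. apply dpl_add. apply dpl_scal. apply dpl_sq. exact dX.
    apply dpl_sq. exact dY. ring. }
  assert (Hb : forall t, 0 <= t -> V t <= Rmin a 1 * rho ^ 2 -> V' t <= - (l / (a + 1)) * V t).
  { intros t ht hV. unfold V, V' in *. set (x := X t) in *. set (y := Y t) in *.
    assert (m1 : Rmin a 1 <= a) by apply Rmin_l.
    assert (m2 : Rmin a 1 <= 1) by apply Rmin_r.
    assert (m3 : 0 < Rmin a 1) by (apply Rmin_glb_lt; lra).
    assert (x ^ 2 <= rho ^ 2).
    { assert (a * x ^ 2 <= a * rho ^ 2) by nra. nra. }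
    assert (y ^ 2 <= rho ^ 2) by nra.
    assert (hx : Rabs x <= rho) by (apply sq_abs; lra).
    assert (hy : Rabs y <= rho) by (apply sq_abs; lra).
    assert (Q : - P * x ^ 2 - Rr * x * y - e * y ^ 2 <= - l * (x ^ 2 + y ^ 2)) by (apply quad_bound; auto; unfold P, Rr; nra).
    assert (N1 : - ((a * k1) * x ^ 2 * y) <= Rabs (a * k1) * x ^ 2 * rho) by (apply tb; auto; nra).
    assert (N2 : - (k2 * y ^ 2 * x) <= Rabs k2 * y ^ 2 * rho) by (apply tb; auto; nra).
    assert (N3 : - (k3 * y ^ 2 * y) <= Rabs k3 * y ^ 2 * rho) by (apply tb; auto; nra).
    assert (N : Rabs (a * k1) * x ^ 2 * rho + Rabs k2 * y ^ 2 * rho + Rabs k3 * y ^ 2 * rho <= rho * K * (x ^ 2 + y ^ 2)).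
    { unfold K. pose proof (Rabs_pos (a*k1)); pose proof (Rabs_pos k2); pose proof (Rabs_pos k3).
      assert (0 <= rho * (Rabs (a * k1) * y ^ 2 + Rabs k2 * x ^ 2 + Rabs k3 * x ^ 2)).
      { apply Rmult_le_pos. lra. pose proof (pow2_ge_0 x); pose proof (pow2_ge_0 y).
        assert (0 <= Rabs (a * k1) * y ^ 2) by (apply Rmult_le_pos; lra).
        assert (0 <= Rabs k2 * x ^ 2) by (apply Rmult_le_pos; lra).
        assert (0 <= Rabs k3 * x ^ 2) by (apply Rmult_le_pos; lra). lra. }
      match goal with |- ?L <= ?Rh => assert (Rh - L = rho * (Rabs (a * k1) * y ^ 2 + Rabs k2 * x ^ 2 + Rabs k3 * x ^ 2)) by ring end.
      lra. }
    assert (rho * K <= l / 2) by nra.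
    assert (E : 2 * a * x * (- al * x - b * y - k1 * x * y) + 2 * y * (- c * x - e * y - y * (k2 * x + k3 * y))
      = 2 * (- P * x ^ 2 - Rr * x * y - e * y ^ 2) + 2 * (- ((a * k1) * x ^ 2 * y) - (k2 * y ^ 2 * x) - (k3 * y ^ 2 * y))) by (unfold P, Rr; ring).
    rewrite E.
    assert (hsq : 0 <= x ^ 2 + y ^ 2) by nra.
    assert (2 * (- P * x ^ 2 - Rr * x * y - e * y ^ 2) + 2 * (- ((a * k1) * x ^ 2 * y) - (k2 * y ^ 2 * x) - (k3 * y ^ 2 * y)) <= - l * (x ^ 2 + y ^ 2)) by nra.
    assert (a * x ^ 2 + y ^ 2 <= (a + 1) * (x ^ 2 + y ^ 2)) by nra.
    assert (- l * (x ^ 2 + y ^ 2) <= - (l / (a + 1)) * (a * x ^ 2 + y ^ 2)).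
    { replace (- (l / (a + 1)) * (a * x ^ 2 + y ^ 2)) with (- l * ((a * x ^ 2 + y ^ 2) / (a + 1))) by (field; lra).
      apply Ropp_le_cancel. rewrite !Ropp_mult_distr_l_reverse, !Ropp_involutive.
      apply Rmult_le_compat_l. lra. apply Rmult_le_reg_r with (a+1). lra.
      replace ((a * x ^ 2 + y ^ 2) / (a + 1) * (a + 1)) with (a * x ^ 2 + y ^ 2) by (field; lra). lra. }
    lra. }
  intros t ht.
  pose proof (decay V V' (Rmin a 1 * rho ^ 2) (l / (a + 1)) ltac:(apply Rdiv_lt_0_compat; lra) Hd
    ltac:(intros s hs; unfold V; nra) Hb H0 t ht). exact H.
Qed.

Lemma tb2 c w u rho : 0 <= w -> Rabs u <= rho -> - (Rabs c * w * rho) <= c * w * u.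
Proof. intros. pose proof (tb c w u rho H H0). lra. Qed.

Lemma unst_e0 (e k2 k3 : R) : e < 0 ->
  exists rho, 0 < rho /\ forall X Y : R -> R,
   (forall t, 0 <= t -> derivable_pt_lim Y t (- e * Y t - Y t * (k2 * X t + k3 * Y t))) ->
   (forall t, 0 <= t -> Rabs (X t) < rho /\ Rabs (Y t) < rho) -> Y 0 = 0.
Proof.
  intros he. set (K := Rabs k2 + Rabs k3).
  assert (hK : 0 <= K) by (unfold K; pose proof (Rabs_pos k2); pose proof (Rabs_pos k3); lra).
  exists (- e / (2 * (K + 1))). split. apply Rdiv_lt_0_compat; lra.
  intros X Y HY Hball.
  assert (V0 : Y 0 ^ 2 <= 0).
  { apply (bounded_growth (fun t => Y t ^ 2) (fun t => 2 * Y t * (- e * Y t - Y t * (k2 * X t + k3 * Y t))) (- e)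
            ((- e / (2 * (K + 1))) ^ 2)); try lra.
    - intros t ht. apply dpl_sq. auto.
    - intros t ht. destruct (Hball t ht) as [hx hy].
      set (rho := - e / (2 * (K + 1))) in *.
      assert (hr : rho * (2 * (K + 1)) = - e) by (unfold rho; field; lra).
      assert (Rabs (k2 * X t + k3 * Y t) <= K * rho).
      { eapply Rle_trans. apply Rabs_triang. rewrite !Rabs_mult. unfold K.
        pose proof (Rabs_pos k2); pose proof (Rabs_pos k3). nra. }
      assert (k2 * X t + k3 * Y t <= K * rho) by (eapply Rle_trans; [apply Rle_abs|eauto]).
      assert (0 < rho) by (unfold rho; apply Rdiv_lt_0_compat; lra).
      assert (K * rho <= - e / 2) by nra.
      pose proof (pow2_ge_0 (Y t)).
      replace (2 * Y t * (- e * Y t - Y t * (k2 * X t + k3 * Y t))) with (Y t ^ 2 * (2 * (- e - (k2 * X t + k3 * Y t)))) by ring.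
      nra.
    - intros t ht. destruct (Hball t ht) as [hx hy].
      assert (0 < - e / (2 * (K + 1))) by (apply Rdiv_lt_0_compat; lra).
      rewrite <- pow2_abs. pose proof (Rabs_pos (Y t)). nra. }
  pose proof (pow2_ge_0 (Y 0)). assert (Y 0 ^ 2 = 0) by lra. 
  nra.
Qed.

Lemma unst_sad (al b k1 c e k2 k3 : R) : 0 < b -> 0 < c -> 0 < e -> 0 <= al -> 0 < b * c - al * e ->
  exists rho, 0 < rho /\ forall X Y : R -> R,
   (forall t, 0 <= t -> derivable_pt_lim X t (- al * X t - b * Y t - k1 * X t * Y t) /\
                        derivable_pt_lim Y t (- c * X t - e * Y t - Y t * (k2 * X t + k3 * Y t))) ->
   (forall t, 0 <= t -> Rabs (X t) < rho /\ Rabs (Y t) < rho) ->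
   e / b * X 0 ^ 2 - 2 * X 0 * Y 0 + al / c * Y 0 ^ 2 <= 0.
Proof.
  intros hb hc he hal hD.
  set (u := e / b). set (w := al / c).
  assert (hu : 0 < u) by (unfold u; apply Rdiv_lt_0_compat; lra).
  assert (hw : 0 <= w) by (unfold w; apply Rdiv_le_0_compat; lra).
  set (m1 := 2 * (b * c - al * e) / b). set (m2 := 2 * (b * c - al * e) / c).
  set (mm := Rmin m1 m2).
  assert (hmm : 0 < mm) by (unfold mm, m1, m2; apply Rmin_glb_lt; apply Rdiv_lt_0_compat; lra).
  assert (hmm1 : mm <= m1) by apply Rmin_l. assert (hmm2 : mm <= m2) by apply Rmin_r.
  set (c1 := - 2 * u * k1 + 2 * k2). set (c2 := 2 * k1 + 2 * k3 - 2 * w * k2). set (c3 := - 2 * w * k3).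
  set (K := Rabs c1 + Rabs c2 + Rabs c3).
  assert (hK : 0 <= K) by (unfold K; pose proof (Rabs_pos c1); pose proof (Rabs_pos c2); pose proof (Rabs_pos c3); lra).
  set (rho := mm / (2 * (K + 1))).
  assert (hrho : 0 < rho) by (unfold rho; apply Rdiv_lt_0_compat; lra).
  assert (hr : rho * (2 * (K + 1)) = mm) by (unfold rho; field; lra).
  exists rho. split; auto.
  intros X Y HXY Hball.
  set (S := u + w + 2).
  apply (bounded_growth (fun t => u * X t ^ 2 - 2 * X t * Y t + w * Y t ^ 2)
    (fun t => 2 * u * X t * (- al * X t - b * Y t - k1 * X t * Y t)
              - 2 * ((- al * X t - b * Y t - k1 * X t * Y t) * Y t + X t * (- c * X t - e * Y t - Y t * (k2 * X t + k3 * Y t)))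
              + 2 * w * Y t * (- c * X t - e * Y t - Y t * (k2 * X t + k3 * Y t)))
    (mm / (2 * S)) (S * (2 * rho ^ 2))).
  - apply Rdiv_lt_0_compat; unfold S; lra.
  - intros t ht. destruct (HXY t ht) as [dX dY].
    apply (dpl_ext (fun s => u * X s ^ 2 - 2 * (X s * Y s) + w * Y s ^ 2)). intro; ring.
    eapply dpl_eq. apply dpl_add. apply dpl_sub. apply dpl_scal. apply dpl_sq; eauto.
    apply dpl_scal. apply dpl_mul; eauto. apply dpl_scal. apply dpl_sq; eauto. ring.
  - intros t ht. destruct (Hball t ht) as [hx hy].
    set (x := X t) in *. set (y := Y t) in *.
    assert (E : 2 * u * x * (- al * x - b * y - k1 * x * y)
              - 2 * ((- al * x - b * y - k1 * x * y) * y + x * (- c * x - e * y - y * (k2 * x + k3 * y)))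
              + 2 * w * y * (- c * x - e * y - y * (k2 * x + k3 * y))
              = m1 * x ^ 2 + m2 * y ^ 2 + (c1 * x ^ 2 * y + c2 * y ^ 2 * x + c3 * y ^ 2 * y)).
    { unfold m1, m2, c1, c2, c3, u, w. field. lra. }
    rewrite E.
    pose proof (pow2_ge_0 x) as px; pose proof (pow2_ge_0 y) as py.
    assert (N1 := tb2 c1 (x ^ 2) y rho px ltac:(lra)).
    assert (N2 := tb2 c2 (y ^ 2) x rho py ltac:(lra)).
    assert (N3 := tb2 c3 (y ^ 2) y rho py ltac:(lra)).
    assert (NN : Rabs c1 * x ^ 2 * rho + Rabs c2 * y ^ 2 * rho + Rabs c3 * y ^ 2 * rho <= rho * K * (x ^ 2 + y ^ 2)).
    { unfold K. pose proof (Rabs_pos c1); pose proof (Rabs_pos c2); pose proof (Rabs_pos c3).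
      assert (0 <= rho * (Rabs c1 * y ^ 2 + Rabs c2 * x ^ 2 + Rabs c3 * x ^ 2)).
      { apply Rmult_le_pos. lra.
        assert (0 <= Rabs c1 * y ^ 2) by (apply Rmult_le_pos; lra).
        assert (0 <= Rabs c2 * x ^ 2) by (apply Rmult_le_pos; lra).
        assert (0 <= Rabs c3 * x ^ 2) by (apply Rmult_le_pos; lra). lra. }
      match goal with |- ?L <= ?Rh => assert (Rh - L = rho * (Rabs c1 * y ^ 2 + Rabs c2 * x ^ 2 + Rabs c3 * x ^ 2)) by ring end.
      lra. }
    assert (rho * K <= mm / 2) by nra.
    assert (L1 : mm * (x ^ 2 + y ^ 2) <= m1 * x ^ 2 + m2 * y ^ 2) by nra.
    assert (G : mm / 2 * (x ^ 2 + y ^ 2) <= m1 * x ^ 2 + m2 * y ^ 2 + (c1 * x ^ 2 * y + c2 * y ^ 2 * x + c3 * y ^ 2 * y)) by nra.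
    assert (WS : u * x ^ 2 - 2 * x * y + w * y ^ 2 <= S * (x ^ 2 + y ^ 2)).
    { unfold S. pose proof (pow2_ge_0 (x + y)). nra. }
    destruct (Rle_or_lt (u * x ^ 2 - 2 * x * y + w * y ^ 2) 0) as [neg|pos].
    + assert (0 < mm / (2 * S)) by (apply Rdiv_lt_0_compat; unfold S; lra).
      assert (0 <= mm / 2 * (x ^ 2 + y ^ 2)) by (apply Rmult_le_pos; lra). nra.
    + assert (mm / (2 * S) * (u * x ^ 2 - 2 * x * y + w * y ^ 2) <= mm / (2 * S) * (S * (x ^ 2 + y ^ 2))).
      { apply Rmult_le_compat_l; auto. left; apply Rdiv_lt_0_compat; unfold S; lra. }
      replace (mm / (2 * S) * (S * (x ^ 2 + y ^ 2))) with (mm / 2 * (x ^ 2 + y ^ 2)) in H0 by (field; unfold S; lra).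
      lra.
  - intros t ht. destruct (Hball t ht) as [hx hy].
    set (x := X t) in *. set (y := Y t) in *.
    rewrite <- (pow2_abs x), <- (pow2_abs y).
    assert (u * Rabs x ^ 2 - 2 * x * y + w * Rabs y ^ 2 <= S * (Rabs x ^ 2 + Rabs y ^ 2)).
    { unfold S. rewrite !pow2_abs. pose proof (pow2_ge_0 (x + y)). pose proof (pow2_ge_0 x). pose proof (pow2_ge_0 y). nra. }
    pose proof (Rabs_pos x); pose proof (Rabs_pos y).
    assert (Rabs x ^ 2 <= rho ^ 2) by nra. assert (Rabs y ^ 2 <= rho ^ 2) by nra.
    assert (0 < S) by (unfold S; lra). nra.
Qed.

Lemma lip_cont (f : R -> R) K : 0 <= K -> (forall s t, Rabs (f s - f t) <= K * Rabs (s - t)) ->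
  forall x, continuous f x.
Proof.
  intros hK H x. apply continuity_pt_filterlim.
  intros eps he. exists (eps / (K + 1)). split. apply Rdiv_lt_0_compat; lra.
  intros y [_ hy]. simpl in *. unfold R_dist in *.
  eapply Rle_lt_trans. apply H.
  apply Rle_lt_trans with ((K + 1) * Rabs (y - x)).
  apply Rmult_le_compat_r. apply Rabs_pos. lra.
  apply Rmult_lt_reg_l with (/ (K + 1)). apply Rinv_0_lt_compat; lra.
  rewrite <- Rmult_assoc, Rinv_l, Rmult_1_l by lra. unfold Rdiv in hy. lra.
Qed.

Lemma rint_ex (f : R -> R) a b : (forall x, continuous f x) -> ex_RInt f a b.
Proof. intros H. apply (@ex_RInt_continuous R_CompleteNormedModule). intros; auto. Qed.

Lemma rint_abs_le (f : R -> R) a b c : (forall x, continuous f x) ->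
  (forall x, Rmin a b <= x <= Rmax a b -> Rabs (f x) <= c) -> Rabs (RInt f a b) <= c * Rabs (b - a).
Proof.
  intros Hc Hb. destruct (Rle_or_lt a b) as [h|h].
  - rewrite (Rabs_right (b - a)) by lra. rewrite Rmult_comm. apply abs_RInt_le_const; auto.
    apply rint_ex; auto. intros t ht. apply Hb. rewrite Rmin_left, Rmax_right; lra.
  - rewrite <- opp_RInt_swap by (apply rint_ex; auto).
    change (Rabs (- RInt f b a) <= c * Rabs (b - a)). rewrite Rabs_Ropp.
    rewrite (Rabs_left (b - a)) by lra. replace (- (b - a)) with (a - b) by ring. rewrite Rmult_comm.
    apply abs_RInt_le_const; auto. lra. apply rint_ex; auto.
    intros t ht. apply Hb. rewrite Rmin_right, Rmax_left; lra.
Qed.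

Lemma rint_chasles0 (f : R -> R) s t : (forall x, continuous f x) ->
  RInt f 0 s - RInt f 0 t = RInt f t s.
Proof.
  intros H. rewrite <- (RInt_Chasles f 0 t s) by (apply rint_ex; auto).
  change (RInt f 0 t + RInt f t s - RInt f 0 t = RInt f t s). ring.
Qed.

Lemma rint_lip (f : R -> R) M : (forall x, continuous f x) -> (forall x, Rabs (f x) <= M) ->
  forall s t, Rabs (RInt f 0 s - RInt f 0 t) <= M * Rabs (s - t).
Proof.
  intros Hc Hb s t. rewrite rint_chasles0 by auto. apply rint_abs_le; auto.
Qed.

Lemma rint_minus (f g : R -> R) a b : (forall x, continuous f x) -> (forall x, continuous g x) ->
  RInt (fun x => f x - g x) a b = RInt f a b - RInt g a b.
Proof. intros; apply (RInt_minus f g); apply rint_ex; auto. Qed.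

Lemma rint_pow (C : R) (k : nat) t :
  RInt (fun s => C * s ^ k) 0 t = C * t ^ (S k) / INR (S k).
Proof.
  apply is_RInt_unique.
  assert (HH := is_RInt_derive (fun s => C * s ^ (S k) / INR (S k)) (fun s => C * s ^ k) 0 t).
  replace (C * t ^ S k / INR (S k)) with (minus (C * t ^ (S k) / INR (S k)) (C * 0 ^ (S k) / INR (S k))).
  apply HH.
  - intros x _. assert (hn : INR (S k) <> 0) by (rewrite S_INR; pose proof (pos_INR k); lra).
    assert (hn2 : INR (S k) = INR k + 1) by apply S_INR.
    remember (INR (S k)) as n. auto_derive. exact I. simpl pred. replace (match k with 0%nat => 1 | S _ => INR k + 1 end) with n. field. auto.
  - intros x _. apply (@ex_derive_continuous R_AbsRing R_NormedModule). auto_derive. auto.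
  - unfold minus, plus, opp. replace (C * 0 ^ S k / INR (S k)) with 0 by (simpl; unfold Rdiv; ring). simpl. ring.
Qed.

Lemma rint_le_poly (f : R -> R) C k t : 0 <= t -> (forall x, continuous f x) ->
  (forall s, 0 < s < t -> Rabs (f s) <= C * s ^ k) ->
  Rabs (RInt f 0 t) <= C * t ^ (S k) / INR (S k).
Proof.
  intros ht Hc Hb. rewrite <- rint_pow.
  assert (Hg : forall x, continuous (fun s => C * s ^ k) x).
  { intros x. apply (@ex_derive_continuous R_AbsRing R_NormedModule). auto_derive. auto. }
  assert (h1 : RInt f 0 t <= RInt (fun s => C * s ^ k) 0 t).
  { apply RInt_le; auto; try (apply rint_ex; auto). intros s hs. specialize (Hb s hs).
    eapply Rle_trans. apply Rle_abs. auto. }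
  assert (h2 : RInt (fun s => - (C * s ^ k)) 0 t <= RInt f 0 t).
  { apply RInt_le; auto; try (apply rint_ex; auto).
    intros x; apply (continuous_opp (fun s => C * s ^ k)); auto.
    intros s hs. specialize (Hb s hs).
    assert (- f s <= Rabs (f s)) by (rewrite <- Rabs_Ropp; apply Rle_abs). lra. }
  rewrite (RInt_opp (fun s => C * s ^ k)) in h2 by (apply rint_ex; auto).
  change (opp ?x) with (- x) in h2.
  apply Rabs_le. lra.
Qed.

Lemma rmax0_lip s t : Rabs (Rmax 0 s - Rmax 0 t) <= Rabs (s - t).
Proof.
  unfold Rmax. destruct (Rle_dec 0 s); destruct (Rle_dec 0 t);
  unfold Rabs; repeat destruct Rcase_abs; lra.
Qed.
Lemma cont_sub (f g : R -> R) x : continuous f x -> continuous g x -> continuous (fun s => f s - g s) x.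
Proof. intros; apply (continuous_minus f g); auto. Qed.

Definition good (F1 F2 : R -> R -> R) (L M : R) : Prop :=
  0 < L /\ 0 < M /\
  (forall a b a' b', Rabs (F1 a b - F1 a' b') <= L * (Rabs (a - a') + Rabs (b - b'))) /\
  (forall a b a' b', Rabs (F2 a b - F2 a' b') <= L * (Rabs (a - a') + Rabs (b - b'))) /\
  (forall a b, Rabs (F1 a b) <= M) /\ (forall a b, Rabs (F2 a b) <= M).

Fixpoint pic (F1 F2 : R -> R -> R) (u0 v0 : R) (n : nat) : (R -> R) * (R -> R) :=
  match n with
  | O => (fun _ => u0, fun _ => v0)
  | S n => let q := pic F1 F2 u0 v0 n in
     (fun t => u0 + RInt (fun s => F1 (fst q (Rmax 0 s)) (snd q (Rmax 0 s))) 0 t,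
      fun t => v0 + RInt (fun s => F2 (fst q (Rmax 0 s)) (snd q (Rmax 0 s))) 0 t)
  end.

Lemma comp_cont (F : R -> R -> R) L K (a b : R -> R) : 0 < L -> 0 <= K ->
  (forall a b a' b', Rabs (F a b - F a' b') <= L * (Rabs (a - a') + Rabs (b - b'))) ->
  (forall s t, Rabs (a s - a t) <= K * Rabs (s - t)) ->
  (forall s t, Rabs (b s - b t) <= K * Rabs (s - t)) ->
  forall x, continuous (fun s => F (a (Rmax 0 s)) (b (Rmax 0 s))) x.
Proof.
  intros hL hK HF Ha Hb. apply (lip_cont _ (2 * L * K)). nra.
  intros s t. eapply Rle_trans. apply HF.
  pose proof (rmax0_lip s t). pose proof (Ha (Rmax 0 s) (Rmax 0 t)). pose proof (Hb (Rmax 0 s) (Rmax 0 t)).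
  pose proof (Rabs_pos (s - t)). pose proof (Rabs_pos (Rmax 0 s - Rmax 0 t)).
  assert (K * Rabs (Rmax 0 s - Rmax 0 t) <= K * Rabs (s - t)) by (apply Rmult_le_compat_l; auto).
  nra.
Qed.

Lemma pic_lip F1 F2 L M u0 v0 : good F1 F2 L M -> forall n,
  (forall s t, Rabs (fst (pic F1 F2 u0 v0 n) s - fst (pic F1 F2 u0 v0 n) t) <= M * Rabs (s - t)) /\
  (forall s t, Rabs (snd (pic F1 F2 u0 v0 n) s - snd (pic F1 F2 u0 v0 n) t) <= M * Rabs (s - t)).
Proof.
  intros [hL [hM [H1 [H2 [B1 B2]]]]]. induction n as [|n [IH1 IH2]].
  - simpl; split; intros; rewrite Rminus_diag, Rabs_R0; pose proof (Rabs_pos (s - t)); nra.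
  - simpl. split; intros s t;
    match goal with |- Rabs (?u + RInt ?g 0 s - (_ + RInt _ 0 t)) <= _ =>
      replace (u + RInt g 0 s - (u + RInt g 0 t)) with (RInt g 0 s - RInt g 0 t) by ring end;
    apply rint_lip; auto; apply (comp_cont _ L M); auto; lra.
Qed.

Lemma pic_cont F1 F2 L M u0 v0 : good F1 F2 L M -> forall n x,
  continuous (fun s => F1 (fst (pic F1 F2 u0 v0 n) (Rmax 0 s)) (snd (pic F1 F2 u0 v0 n) (Rmax 0 s))) x /\
  continuous (fun s => F2 (fst (pic F1 F2 u0 v0 n) (Rmax 0 s)) (snd (pic F1 F2 u0 v0 n) (Rmax 0 s))) x.
Proof.
  intros G n x. destruct (pic_lip _ _ _ _ u0 v0 G n) as [l1 l2].
  destruct G as [hL [hM [H1 [H2 [B1 B2]]]]].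
  split; apply (comp_cont _ L M); auto; lra.
Qed.

Lemma pic_zero F1 F2 u0 v0 n : fst (pic F1 F2 u0 v0 n) 0 = u0 /\ snd (pic F1 F2 u0 v0 n) 0 = v0.
Proof. destruct n; simpl; auto. rewrite !RInt_point. split; apply Rplus_0_r. Qed.

Lemma addK (x y : R) : x + y - x = y. Proof. ring. Qed.
Lemma addK2 (u x y : R) : u + x - (u + y) = x - y. Proof. ring. Qed.

Lemma pic_S1 F1 F2 u0 v0 n t : fst (pic F1 F2 u0 v0 (S n)) t =
  u0 + RInt (fun s => F1 (fst (pic F1 F2 u0 v0 n) (Rmax 0 s)) (snd (pic F1 F2 u0 v0 n) (Rmax 0 s))) 0 t.
Proof. reflexivity. Qed.
Lemma pic_S2 F1 F2 u0 v0 n t : snd (pic F1 F2 u0 v0 (S n)) t =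
  v0 + RInt (fun s => F2 (fst (pic F1 F2 u0 v0 n) (Rmax 0 s)) (snd (pic F1 F2 u0 v0 n) (Rmax 0 s))) 0 t.
Proof. reflexivity. Qed.

Lemma pic_D F1 F2 L M u0 v0 : good F1 F2 L M -> forall n t, 0 <= t ->
  Rabs (fst (pic F1 F2 u0 v0 (S n)) t - fst (pic F1 F2 u0 v0 n) t) +
  Rabs (snd (pic F1 F2 u0 v0 (S n)) t - snd (pic F1 F2 u0 v0 n) t)
  <= 2 * M * (2 * L) ^ n * t ^ (S n) / INR (Factorial.fact (S n)).
Proof.
  intros G. pose proof (pic_cont _ _ _ _ u0 v0 G) as PC.
  destruct G as [hL [hM [H1 [H2 [B1 B2]]]]].
  induction n as [|n IH]; intros t ht.
  - rewrite !pic_S1, !pic_S2. simpl fst; simpl snd.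
    rewrite !addK.
    rewrite !RInt_const. change (scal (t - 0) (F1 u0 v0)) with ((t - 0) * F1 u0 v0).
    change (scal (t - 0) (F2 u0 v0)) with ((t - 0) * F2 u0 v0).
    rewrite !Rabs_mult. rewrite Rabs_right by lra. simpl. 
    specialize (B1 u0 v0). specialize (B2 u0 v0). nra.
  - rewrite (pic_S1 _ _ _ _ (S n)), (pic_S2 _ _ _ _ (S n)), (pic_S1 _ _ _ _ n), (pic_S2 _ _ _ _ n).
    set (C := 2 * M * (2 * L) ^ n / INR (Factorial.fact (S n))).
    assert (hC : 0 <= C).
    { unfold C. apply Rdiv_le_0_compat. apply Rmult_le_pos. lra. apply pow_le; lra. apply lt_0_INR, Factorial.lt_O_fact. }
    assert (IH' : forall s, 0 < s < t ->
      Rabs (fst (pic F1 F2 u0 v0 (S n)) s - fst (pic F1 F2 u0 v0 n) s) +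
      Rabs (snd (pic F1 F2 u0 v0 (S n)) s - snd (pic F1 F2 u0 v0 n) s) <= C * s ^ (S n)).
    { intros s hs. eapply Rle_trans. apply IH; lra. right. unfold C. field. apply INR_fact_neq_0. }
    match goal with |- Rabs (?u + RInt ?g 0 t - (_ + RInt ?h 0 t)) + Rabs (?v + RInt ?g' 0 t - (_ + RInt ?h' 0 t)) <= _ =>
      replace (u + RInt g 0 t - (u + RInt h 0 t)) with (RInt (fun s => g s - h s) 0 t)
        by (rewrite addK2, rint_minus; [reflexivity| apply PC | apply PC]);
      replace (v + RInt g' 0 t - (v + RInt h' 0 t)) with (RInt (fun s => g' s - h' s) 0 t)
        by (rewrite addK2, rint_minus; [reflexivity| apply PC | apply PC]) end.
    assert (I1 : Rabs (RInt (fun s => F1 (fst (pic F1 F2 u0 v0 (S n)) (Rmax 0 s)) (snd (pic F1 F2 u0 v0 (S n)) (Rmax 0 s))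
                  - F1 (fst (pic F1 F2 u0 v0 n) (Rmax 0 s)) (snd (pic F1 F2 u0 v0 n) (Rmax 0 s))) 0 t)
                 <= (L * C) * t ^ (S (S n)) / INR (S (S n))).
    { apply rint_le_poly; auto.
      - intro x. apply cont_sub; apply PC.
      - intros s hs. rewrite Rmax_right by lra. eapply Rle_trans. apply H1.
        rewrite Rmult_assoc. apply Rmult_le_compat_l. lra. apply IH'. auto. }
    assert (I2 : Rabs (RInt (fun s => F2 (fst (pic F1 F2 u0 v0 (S n)) (Rmax 0 s)) (snd (pic F1 F2 u0 v0 (S n)) (Rmax 0 s))
                  - F2 (fst (pic F1 F2 u0 v0 n) (Rmax 0 s)) (snd (pic F1 F2 u0 v0 n) (Rmax 0 s))) 0 t)
                 <= (L * C) * t ^ (S (S n)) / INR (S (S n))).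
    { apply rint_le_poly; auto.
      - intro x. apply cont_sub; apply PC.
      - intros s hs. rewrite Rmax_right by lra. eapply Rle_trans. apply H2.
        rewrite Rmult_assoc. apply Rmult_le_compat_l. lra. apply IH'. auto. }
    eapply Rle_trans. apply Rplus_le_compat; [exact I1 | exact I2].
    right. unfold C. rewrite (fact_simpl (S n)), mult_INR. simpl pow.
    field. split. apply INR_fact_neq_0. apply not_0_INR. lia.
Qed.

Lemma pic_tele F1 F2 L M u0 v0 : good F1 F2 L M -> forall n m t T, 0 <= t <= T ->
  Rabs (fst (pic F1 F2 u0 v0 (n + m)) t - fst (pic F1 F2 u0 v0 n) t) +
  Rabs (snd (pic F1 F2 u0 v0 (n + m)) t - snd (pic F1 F2 u0 v0 n) t)
  <= M / L * (E1 (2 * L * T) (n + m) - E1 (2 * L * T) n).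
Proof.
  intros G. pose proof (pic_D _ _ _ _ u0 v0 G) as PD.
  destruct G as [hL [hM _]].
  intros n m t T ht. induction m as [|m IH].
  - rewrite Nat.add_0_r, !Rminus_diag, Rabs_R0. lra.
  - rewrite Nat.add_succ_r.
    assert (Hs := PD (n + m)%nat t ltac:(lra)).
    assert (Hm : t ^ S (n + m) <= T ^ S (n + m)) by (apply pow_incr; lra).
    assert (Hb : 2 * M * (2 * L) ^ (n + m) * t ^ S (n + m) / INR (Factorial.fact (S (n + m)))
      <= M / L * (E1 (2 * L * T) (S (n + m)) - E1 (2 * L * T) (n + m))).
    { unfold E1. rewrite tech5. 
      replace (M / L * (sum_f_R0 (fun k : nat => / INR (Factorial.fact k) * (2 * L * T) ^ k) (n + m) +
        / INR (Factorial.fact (S (n + m))) * (2 * L * T) ^ S (n + m) -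
        sum_f_R0 (fun k : nat => / INR (Factorial.fact k) * (2 * L * T) ^ k) (n + m)))
      with (2 * M * (2 * L) ^ (n + m) * T ^ S (n + m) / INR (Factorial.fact (S (n + m)))).
      2: { rewrite (Rpow_mult_distr (2 * L) T). change ((2*L)^S(n+m)) with (2*L*(2*L)^(n+m)). field. split. apply INR_fact_neq_0. lra. }
      unfold Rdiv. apply Rmult_le_compat_r. left; apply Rinv_0_lt_compat, lt_0_INR, Factorial.lt_O_fact.
      apply Rmult_le_compat_l; auto. apply Rmult_le_pos. lra. apply pow_le; lra. }
    pose proof (Rabs_triang (fst (pic F1 F2 u0 v0 (S (n + m))) t - fst (pic F1 F2 u0 v0 (n + m)) t)
                            (fst (pic F1 F2 u0 v0 (n + m)) t - fst (pic F1 F2 u0 v0 n) t)).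
    pose proof (Rabs_triang (snd (pic F1 F2 u0 v0 (S (n + m))) t - snd (pic F1 F2 u0 v0 (n + m)) t)
                            (snd (pic F1 F2 u0 v0 (n + m)) t - snd (pic F1 F2 u0 v0 n) t)).
    replace (fst (pic F1 F2 u0 v0 (S (n + m))) t - fst (pic F1 F2 u0 v0 (n + m)) t +
       (fst (pic F1 F2 u0 v0 (n + m)) t - fst (pic F1 F2 u0 v0 n) t)) with
      (fst (pic F1 F2 u0 v0 (S (n + m))) t - fst (pic F1 F2 u0 v0 n) t) in H by ring.
    replace (snd (pic F1 F2 u0 v0 (S (n + m))) t - snd (pic F1 F2 u0 v0 (n + m)) t +
       (snd (pic F1 F2 u0 v0 (n + m)) t - snd (pic F1 F2 u0 v0 n) t)) with
      (snd (pic F1 F2 u0 v0 (S (n + m))) t - snd (pic F1 F2 u0 v0 n) t) in H0 by ring.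
    lra.
Qed.

Lemma pic_tele' F1 F2 L M u0 v0 : good F1 F2 L M -> forall n m t T, (n <= m)%nat -> 0 <= t <= T ->
  Rabs (fst (pic F1 F2 u0 v0 m) t - fst (pic F1 F2 u0 v0 n) t) +
  Rabs (snd (pic F1 F2 u0 v0 m) t - snd (pic F1 F2 u0 v0 n) t)
  <= M / L * (E1 (2 * L * T) m - E1 (2 * L * T) n).
Proof.
  intros G n m t T hnm ht. replace m with (n + (m - n))%nat by lia. apply pic_tele; auto.
Qed.

Lemma pic_neg F1 F2 u0 v0 n t : t <= 0 ->
  fst (pic F1 F2 u0 v0 (S n)) t = u0 + t * F1 u0 v0 /\
  snd (pic F1 F2 u0 v0 (S n)) t = v0 + t * F2 u0 v0.
Proof.
  intros ht. rewrite pic_S1, pic_S2. destruct (pic_zero F1 F2 u0 v0 n) as [z1 z2].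
  rewrite (RInt_ext _ (fun _ => F1 u0 v0)), (RInt_ext (fun s => F2 _ _) (fun _ => F2 u0 v0)).
  - rewrite !RInt_const. change (scal (t - 0) (F1 u0 v0)) with ((t - 0) * F1 u0 v0).
    change (scal (t - 0) (F2 u0 v0)) with ((t - 0) * F2 u0 v0). split; ring.
  - intros x hx. rewrite Rmin_right, Rmax_left in hx by lra. rewrite Rmax_left by lra. rewrite z1, z2; auto.
  - intros x hx. rewrite Rmin_right, Rmax_left in hx by lra. rewrite Rmax_left by lra. rewrite z1, z2; auto.
Qed.

Lemma E1_cauchy x : forall eps, 0 < eps -> exists N, forall n m, (N <= n)%nat -> (N <= m)%nat ->
  Rabs (E1 x n - E1 x m) < eps.
Proof.
  intros eps he. destruct (CV_Cauchy (E1 x) (exist _ (exp x) (E1_cvg x)) eps he) as [N HN].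
  exists N. intros n m hn hm. apply (HN n m hn hm).
Qed.

Lemma pic_conv F1 F2 L M u0 v0 : good F1 F2 L M -> forall t,
  ex_finite_lim_seq (fun n => fst (pic F1 F2 u0 v0 n) t) /\
  ex_finite_lim_seq (fun n => snd (pic F1 F2 u0 v0 n) t).
Proof.
  intros G t. destruct (Rle_or_lt 0 t) as [ht|ht].
  - assert (hL : 0 < L) by apply G. assert (hM : 0 < M) by apply G.
    assert (C : forall eps : posreal, exists N, forall n m, (N <= n)%nat -> (N <= m)%nat ->
      Rabs (fst (pic F1 F2 u0 v0 n) t - fst (pic F1 F2 u0 v0 m) t) +
      Rabs (snd (pic F1 F2 u0 v0 n) t - snd (pic F1 F2 u0 v0 m) t) < eps).
    { intros eps. destruct (E1_cauchy (2 * L * t) (eps * L / M)) as [N HN].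
      { apply Rdiv_lt_0_compat. apply Rmult_lt_0_compat. apply cond_pos. auto. auto. }
      exists N. intros n m hn hm.
      assert (K : forall n m, (N <= n)%nat -> (N <= m)%nat -> (n <= m)%nat ->
        Rabs (fst (pic F1 F2 u0 v0 m) t - fst (pic F1 F2 u0 v0 n) t) +
        Rabs (snd (pic F1 F2 u0 v0 m) t - snd (pic F1 F2 u0 v0 n) t) < eps).
      { intros n' m' hn' hm' hnm. eapply Rle_lt_trans. apply (pic_tele' _ _ _ _ u0 v0 G n' m' t t hnm); lra.
        specialize (HN m' n' hm' hn').
        assert (E1 (2 * L * t) m' - E1 (2 * L * t) n' < eps * L / M) by (eapply Rle_lt_trans; [apply Rle_abs|exact HN]).
        apply Rmult_lt_reg_l with (L / M). apply Rdiv_lt_0_compat; auto.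
        replace (L / M * (M / L * (E1 (2 * L * t) m' - E1 (2 * L * t) n'))) with (E1 (2 * L * t) m' - E1 (2 * L * t) n') by (field; lra).
        replace (L / M * eps) with (eps * L / M) by (field; lra). auto. }
      destruct (Nat.le_ge_cases n m) as [h|h].
      + rewrite (Rabs_minus_sym (fst (pic F1 F2 u0 v0 n) t)), (Rabs_minus_sym (snd (pic F1 F2 u0 v0 n) t)). apply K; auto.
      + apply K; auto. }
    split; apply ex_lim_seq_cauchy_corr; intros eps; destruct (C eps) as [N HN]; exists N; intros n m hn hm;
      specialize (HN n m hn hm); pose proof (Rabs_pos (fst (pic F1 F2 u0 v0 n) t - fst (pic F1 F2 u0 v0 m) t));
      pose proof (Rabs_pos (snd (pic F1 F2 u0 v0 n) t - snd (pic F1 F2 u0 v0 m) t)); lra.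
  - split.
    + exists (u0 + t * F1 u0 v0). apply is_lim_seq_incr_1.
      apply (is_lim_seq_ext (fun _ => u0 + t * F1 u0 v0)). intros n. symmetry. apply pic_neg. lra.
      apply is_lim_seq_const.
    + exists (v0 + t * F2 u0 v0). apply is_lim_seq_incr_1.
      apply (is_lim_seq_ext (fun _ => v0 + t * F2 u0 v0)). intros n. symmetry. apply pic_neg. lra.
      apply is_lim_seq_const.
Qed.

Definition Ul F1 F2 u0 v0 t := real (Lim_seq (fun n => fst (pic F1 F2 u0 v0 n) t)).
Definition Vl F1 F2 u0 v0 t := real (Lim_seq (fun n => snd (pic F1 F2 u0 v0 n) t)).

Lemma UV_lim F1 F2 L M u0 v0 : good F1 F2 L M -> forall t,
  is_lim_seq (fun n => fst (pic F1 F2 u0 v0 n) t) (Ul F1 F2 u0 v0 t) /\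
  is_lim_seq (fun n => snd (pic F1 F2 u0 v0 n) t) (Vl F1 F2 u0 v0 t).
Proof.
  intros G t. destruct (pic_conv _ _ _ _ u0 v0 G t) as [[l1 h1] [l2 h2]].
  unfold Ul, Vl. rewrite (is_lim_seq_unique _ _ h1), (is_lim_seq_unique _ _ h2). simpl. auto.
Qed.

Lemma E1_lim x : is_lim_seq (E1 x) (exp x).
Proof. apply is_lim_seq_Reals, E1_cvg. Qed.

Lemma UV_err F1 F2 L M u0 v0 : good F1 F2 L M -> forall n t T, 0 <= t <= T ->
  Rabs (Ul F1 F2 u0 v0 t - fst (pic F1 F2 u0 v0 n) t) + Rabs (Vl F1 F2 u0 v0 t - snd (pic F1 F2 u0 v0 n) t)
  <= M / L * (exp (2 * L * T) - E1 (2 * L * T) n).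
Proof.
  intros G n t T ht. destruct (UV_lim _ _ _ _ u0 v0 G t) as [l1 l2].
  assert (H := is_lim_seq_le_loc
    (fun m => Rabs (fst (pic F1 F2 u0 v0 m) t - fst (pic F1 F2 u0 v0 n) t) + Rabs (snd (pic F1 F2 u0 v0 m) t - snd (pic F1 F2 u0 v0 n) t))
    (fun m => M / L * (E1 (2 * L * T) m - E1 (2 * L * T) n))
    (Rabs (Ul F1 F2 u0 v0 t - fst (pic F1 F2 u0 v0 n) t) + Rabs (Vl F1 F2 u0 v0 t - snd (pic F1 F2 u0 v0 n) t))
    (M / L * (exp (2 * L * T) - E1 (2 * L * T) n))).
  simpl in H. apply H.
  - exists n. intros m hm. apply pic_tele'; auto.
  - apply is_lim_seq_plus'.
    + apply (is_lim_seq_abs _ (Ul F1 F2 u0 v0 t - fst (pic F1 F2 u0 v0 n) t)).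
      apply is_lim_seq_minus'; auto. apply is_lim_seq_const.
    + apply (is_lim_seq_abs _ (Vl F1 F2 u0 v0 t - snd (pic F1 F2 u0 v0 n) t)).
      apply is_lim_seq_minus'; auto. apply is_lim_seq_const.
  - apply (is_lim_seq_scal_l _ (M / L) (exp (2 * L * T) - E1 (2 * L * T) n)).
    apply is_lim_seq_minus'. apply E1_lim. apply is_lim_seq_const.
Qed.

Lemma UV_lip F1 F2 L M u0 v0 : good F1 F2 L M ->
  (forall s t, Rabs (Ul F1 F2 u0 v0 s - Ul F1 F2 u0 v0 t) <= M * Rabs (s - t)) /\
  (forall s t, Rabs (Vl F1 F2 u0 v0 s - Vl F1 F2 u0 v0 t) <= M * Rabs (s - t)).
Proof.
  intros G. split; intros s t; destruct (UV_lim _ _ _ _ u0 v0 G s) as [a1 a2];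
  destruct (UV_lim _ _ _ _ u0 v0 G t) as [b1 b2].
  - assert (H := is_lim_seq_le (fun m => Rabs (fst (pic F1 F2 u0 v0 m) s - fst (pic F1 F2 u0 v0 m) t))
      (fun _ => M * Rabs (s - t)) (Rabs (Ul F1 F2 u0 v0 s - Ul F1 F2 u0 v0 t)) (M * Rabs (s - t))).
    simpl in H. apply H.
    + intros m. apply (pic_lip _ _ _ _ u0 v0 G m).
    + apply (is_lim_seq_abs _ (Ul F1 F2 u0 v0 s - Ul F1 F2 u0 v0 t)). apply is_lim_seq_minus'; auto.
    + apply is_lim_seq_const.
  - assert (H := is_lim_seq_le (fun m => Rabs (snd (pic F1 F2 u0 v0 m) s - snd (pic F1 F2 u0 v0 m) t))
      (fun _ => M * Rabs (s - t)) (Rabs (Vl F1 F2 u0 v0 s - Vl F1 F2 u0 v0 t)) (M * Rabs (s - t))).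
    simpl in H. apply H.
    + intros m. apply (pic_lip _ _ _ _ u0 v0 G m).
    + apply (is_lim_seq_abs _ (Vl F1 F2 u0 v0 s - Vl F1 F2 u0 v0 t)). apply is_lim_seq_minus'; auto.
    + apply is_lim_seq_const.
Qed.

Lemma UV0 F1 F2 L M u0 v0 : good F1 F2 L M -> Ul F1 F2 u0 v0 0 = u0 /\ Vl F1 F2 u0 v0 0 = v0.
Proof.
  intros G. destruct (UV_lim _ _ _ _ u0 v0 G 0) as [l1 l2].
  assert (h1 : is_lim_seq (fun n => fst (pic F1 F2 u0 v0 n) 0) u0).
  { apply (is_lim_seq_ext (fun _ => u0)). intros n; symmetry; apply pic_zero. apply is_lim_seq_const. }
  assert (h2 : is_lim_seq (fun n => snd (pic F1 F2 u0 v0 n) 0) v0).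
  { apply (is_lim_seq_ext (fun _ => v0)). intros n; symmetry; apply pic_zero. apply is_lim_seq_const. }
  apply is_lim_seq_unique in l1, l2, h1, h2. rewrite l1 in h1. rewrite l2 in h2.
  injection h1; injection h2; auto.
Qed.

Lemma UV_cont F1 F2 L M u0 v0 : good F1 F2 L M -> forall x,
  continuous (fun s => F1 (Ul F1 F2 u0 v0 (Rmax 0 s)) (Vl F1 F2 u0 v0 (Rmax 0 s))) x /\
  continuous (fun s => F2 (Ul F1 F2 u0 v0 (Rmax 0 s)) (Vl F1 F2 u0 v0 (Rmax 0 s))) x.
Proof.
  intros G x. destruct (UV_lip _ _ _ _ u0 v0 G) as [l1 l2].
  destruct G as [hL [hM [H1 [H2 [B1 B2]]]]].
  split; apply (comp_cont _ L M); auto; lra.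
Qed.

Lemma rabs_rmax0 s t : Rmin 0 t <= s <= Rmax 0 t -> 0 <= Rmax 0 s <= Rabs t.
Proof.
  intros [h1 h2]. unfold Rmax, Rmin, Rabs in *. destruct (Rle_dec 0 s); destruct (Rle_dec 0 t);
  destruct (Rcase_abs t); lra.
Qed.

Lemma UV_int F1 F2 L M u0 v0 : good F1 F2 L M -> forall t,
  Ul F1 F2 u0 v0 t = u0 + RInt (fun s => F1 (Ul F1 F2 u0 v0 (Rmax 0 s)) (Vl F1 F2 u0 v0 (Rmax 0 s))) 0 t /\
  Vl F1 F2 u0 v0 t = v0 + RInt (fun s => F2 (Ul F1 F2 u0 v0 (Rmax 0 s)) (Vl F1 F2 u0 v0 (Rmax 0 s))) 0 t.
Proof.
  intros G t. pose proof (UV_cont _ _ _ _ u0 v0 G) as UC. pose proof (pic_cont _ _ _ _ u0 v0 G) as PC.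
  pose proof (UV_err _ _ _ _ u0 v0 G) as ER. destruct (UV_lim _ _ _ _ u0 v0 G t) as [l1 l2].
  pose proof G as G'. destruct G' as [hL [hM [H1 [H2 [B1 B2]]]]].
  set (x := 2 * L * Rabs t).
  set (K := M / L * L * Rabs (t - 0)).
  set (e := fun n => K * (exp x - E1 x n)).
  assert (he : is_lim_seq e 0).
  { unfold e. assert (H := is_lim_seq_scal_l (fun n => exp x - E1 x n) K (exp x - exp x)
       (is_lim_seq_minus' _ _ _ _ (is_lim_seq_const _) (E1_lim x))).
    simpl in H. replace (K * (exp x - exp x)) with 0 in H by ring. exact H. }
  assert (Hb : forall (F : R -> R -> R), (forall a b a' b', Rabs (F a b - F a' b') <= L * (Rabs (a - a') + Rabs (b - b'))) ->
     (forall x, continuous (fun s => F (Ul F1 F2 u0 v0 (Rmax 0 s)) (Vl F1 F2 u0 v0 (Rmax 0 s))) x) ->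
     (forall n x, continuous (fun s => F (fst (pic F1 F2 u0 v0 n) (Rmax 0 s)) (snd (pic F1 F2 u0 v0 n) (Rmax 0 s))) x) ->
     forall w0, is_lim_seq (fun n => w0 + RInt (fun s => F (fst (pic F1 F2 u0 v0 n) (Rmax 0 s)) (snd (pic F1 F2 u0 v0 n) (Rmax 0 s))) 0 t)
       (w0 + RInt (fun s => F (Ul F1 F2 u0 v0 (Rmax 0 s)) (Vl F1 F2 u0 v0 (Rmax 0 s))) 0 t)).
  { intros F HF C1 C2 w0.
    set (I := RInt (fun s => F (Ul F1 F2 u0 v0 (Rmax 0 s)) (Vl F1 F2 u0 v0 (Rmax 0 s))) 0 t).
    apply (is_lim_seq_le_le (fun n => w0 + I - e n) _ (fun n => w0 + I + e n)).
    - intros n.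
      assert (D : Rabs (RInt (fun s => F (fst (pic F1 F2 u0 v0 n) (Rmax 0 s)) (snd (pic F1 F2 u0 v0 n) (Rmax 0 s))
                   - F (Ul F1 F2 u0 v0 (Rmax 0 s)) (Vl F1 F2 u0 v0 (Rmax 0 s))) 0 t) <= e n).
      { eapply Rle_trans. apply rint_abs_le with (c := L * (M / L * (exp x - E1 x n))).
        { intro y; apply cont_sub; auto. }
        2: { right. unfold e, K. ring. }
        intros s hs. eapply Rle_trans. apply HF.
        pose proof (ER n (Rmax 0 s) (Rabs t) (rabs_rmax0 s t hs)).
        rewrite (Rabs_minus_sym (fst _ _)), (Rabs_minus_sym (snd _ _)).
        assert (0 <= M / L * (exp x - E1 x n)).
        { eapply Rle_trans; [|exact H]. pose proof (Rabs_pos (Ul F1 F2 u0 v0 (Rmax 0 s) - fst (pic F1 F2 u0 v0 n) (Rmax 0 s)));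
          pose proof (Rabs_pos (Vl F1 F2 u0 v0 (Rmax 0 s) - snd (pic F1 F2 u0 v0 n) (Rmax 0 s))); lra. }
        unfold x in *. nra. }
      rewrite rint_minus in D by auto. unfold I.
      apply Rabs_le_between' in D. lra.
    - assert (H := is_lim_seq_minus' _ _ _ _ (is_lim_seq_const (w0 + I)) he). rewrite Rminus_0_r in H. exact H.
    - assert (H := is_lim_seq_plus' _ _ _ _ (is_lim_seq_const (w0 + I)) he). rewrite Rplus_0_r in H. exact H. }
  apply is_lim_seq_incr_1 in l1, l2.
  split.
  - assert (h := Hb F1 H1 (fun x => proj1 (UC x)) (fun n x => proj1 (PC n x)) u0).
    apply is_lim_seq_unique in l1, h. simpl in l1, h. rewrite l1 in h. injection h; auto.
  - assert (h := Hb F2 H2 (fun x => proj2 (UC x)) (fun n x => proj2 (PC n x)) v0).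
    apply is_lim_seq_unique in l2, h. simpl in l2, h. rewrite l2 in h. injection h; auto.
Qed.

Lemma int_deriv (g : R -> R) w0 t : (forall x, continuous g x) ->
  derivable_pt_lim (fun t => w0 + RInt g 0 t) t (g t).
Proof.
  intros Hc. eapply dpl_eq. apply dpl_add. apply dpl_const. apply is_derive_Reals.
  apply (is_derive_RInt g (fun t => RInt g 0 t) 0 t).
  - apply filter_forall. intro b. apply (@RInt_correct R_CompleteNormedModule). apply rint_ex; auto.
  - auto.
  - ring.
Qed.

Theorem picard F1 F2 L M u0 v0 : good F1 F2 L M ->
  exists U V : R -> R, U 0 = u0 /\ V 0 = v0 /\ forall t, 0 <= t ->
    derivable_pt_lim U t (F1 (U t) (V t)) /\ derivable_pt_lim V t (F2 (U t) (V t)).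
Proof.
  intros G. exists (Ul F1 F2 u0 v0), (Vl F1 F2 u0 v0).
  destruct (UV0 _ _ _ _ u0 v0 G) as [z1 z2]. split; auto. split; auto.
  intros t ht. pose proof (UV_cont _ _ _ _ u0 v0 G) as UC.
  split.
  - apply (dpl_ext (fun t => u0 + RInt (fun s => F1 (Ul F1 F2 u0 v0 (Rmax 0 s)) (Vl F1 F2 u0 v0 (Rmax 0 s))) 0 t)).
    intro s. symmetry. apply (UV_int _ _ _ _ u0 v0 G).
    pose proof (int_deriv (fun s => F1 (Ul F1 F2 u0 v0 (Rmax 0 s)) (Vl F1 F2 u0 v0 (Rmax 0 s))) u0 t (fun x => proj1 (UC x))).
    cbv beta in H. rewrite Rmax_right in H by lra. exact H.
  - apply (dpl_ext (fun t => v0 + RInt (fun s => F2 (Ul F1 F2 u0 v0 (Rmax 0 s)) (Vl F1 F2 u0 v0 (Rmax 0 s))) 0 t)).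
    intro s. symmetry. apply (UV_int _ _ _ _ u0 v0 G).
    pose proof (int_deriv (fun s => F2 (Ul F1 F2 u0 v0 (Rmax 0 s)) (Vl F1 F2 u0 v0 (Rmax 0 s))) v0 t (fun x => proj2 (UC x))).
    cbv beta in H. rewrite Rmax_right in H by lra. exact H.
Qed.

Definition clamp (x : R) : R := Rmax (-2) (Rmin 2 x).

Lemma clamp_lip x y : Rabs (clamp x - clamp y) <= Rabs (x - y).
Proof. unfold clamp, Rmax, Rmin. repeat destruct Rle_dec; unfold Rabs; repeat destruct Rcase_abs; lra. Qed.
Lemma clamp_bnd x : Rabs (clamp x) <= 2.
Proof. unfold clamp, Rmax, Rmin. repeat destruct Rle_dec; unfold Rabs; repeat destruct Rcase_abs; lra. Qed.
Lemma clamp_id x : -2 <= x <= 2 -> clamp x = x.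
Proof. intros. unfold clamp, Rmax, Rmin. repeat destruct Rle_dec; lra. Qed.
Lemma clamp_neg x : x < 0 -> x <= clamp x <= 0.
Proof. intros. unfold clamp, Rmax, Rmin. repeat destruct Rle_dec; lra. Qed.

Definition G1 (beta mu : R) (a b : R) : R := mu - beta * a * b - mu * a.
Definition G2 (beta mu p : R) (a b : R) : R := beta * (p * a + (1 - a - b)) * b - mu * b.

Lemma pb x y X : Rabs x <= X -> Rabs (x * y) <= X * Rabs y.
Proof. intros. rewrite Rabs_mult. apply Rmult_le_compat_r; auto. apply Rabs_pos. Qed.

Lemma abs3 x y z : Rabs (x + y + z) <= Rabs x + Rabs y + Rabs z.
Proof. eapply Rle_trans. apply Rabs_triang. pose proof (Rabs_triang x y). lra. Qed.

Lemma G1_lip beta mu a b a' b' : 0 < beta -> 0 < mu -> Rabs a <= 2 -> Rabs b' <= 2 ->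
  Rabs (G1 beta mu a b - G1 beta mu a' b') <= (7 * beta + 2 * mu + 1) * (Rabs (a - a') + Rabs (b - b')).
Proof.
  intros hb hm ha hb'. unfold G1.
  replace (mu - beta * a * b - mu * a - (mu - beta * a' * b' - mu * a'))
    with ((- beta * a) * (b - b') + (- beta * b') * (a - a') + (- mu) * (a - a')) by ring.
  eapply Rle_trans. apply abs3.
  assert (Rabs (- beta * a) <= 2 * beta) by (rewrite Rabs_mult, Rabs_Ropp, Rabs_right by lra; nra).
  assert (Rabs (- beta * b') <= 2 * beta) by (rewrite Rabs_mult, Rabs_Ropp, Rabs_right by lra; nra).
  assert (Rabs (- mu) <= mu) by (rewrite Rabs_Ropp, Rabs_right; lra).
  pose proof (pb _ (b - b') _ H). pose proof (pb _ (a - a') _ H0). pose proof (pb _ (a - a') _ H1).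
  pose proof (Rabs_pos (a - a')). pose proof (Rabs_pos (b - b')). nra.
Qed.

Lemma G2_lip beta mu p a b a' b' : 0 < beta -> 0 < mu -> 0 < p < 1 -> Rabs a <= 2 -> Rabs b <= 2 -> Rabs b' <= 2 ->
  Rabs (G2 beta mu p a b - G2 beta mu p a' b') <= (7 * beta + 2 * mu + 1) * (Rabs (a - a') + Rabs (b - b')).
Proof.
  intros hb hm hp ha hbb hb'. unfold G2.
  replace (beta * (p * a + (1 - a - b)) * b - mu * b - (beta * (p * a' + (1 - a' - b')) * b' - mu * b'))
    with ((beta * (p - 1) * a) * (b - b') + (beta * (p - 1) * b') * (a - a') +
          (beta - beta * (b + b') - mu) * (b - b')) by ring.
  eapply Rle_trans. apply abs3.
  assert (Rabs (beta * (p - 1) * a) <= 2 * beta).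
  { rewrite !Rabs_mult, (Rabs_right beta), (Rabs_left1 (p - 1)) by lra.
    pose proof (Rabs_pos a). assert ((1 - p) * Rabs a <= 2) by nra.
    replace (beta * - (p - 1) * Rabs a) with (beta * ((1 - p) * Rabs a)) by ring. nra. }
  assert (Rabs (beta * (p - 1) * b') <= 2 * beta).
  { rewrite !Rabs_mult, (Rabs_right beta), (Rabs_left1 (p - 1)) by lra.
    pose proof (Rabs_pos b'). assert ((1 - p) * Rabs b' <= 2) by nra.
    replace (beta * - (p - 1) * Rabs b') with (beta * ((1 - p) * Rabs b')) by ring. nra. }
  assert (Rabs (beta - beta * (b + b') - mu) <= 5 * beta + mu).
  { eapply Rle_trans. unfold Rminus. apply abs3. rewrite Rabs_Ropp, Rabs_Ropp, (Rabs_right beta), (Rabs_right mu), Rabs_mult, (Rabs_right beta) by lra.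
    pose proof (Rabs_triang b b'). nra. }
  pose proof (pb _ (b - b') _ H). pose proof (pb _ (a - a') _ H0). pose proof (pb _ (b - b') _ H1).
  pose proof (Rabs_pos (a - a')). pose proof (Rabs_pos (b - b')). nra.
Qed.

Lemma G1_bnd beta mu a b : 0 < beta -> 0 < mu -> Rabs a <= 2 -> Rabs b <= 2 ->
  Rabs (G1 beta mu a b) <= 14 * beta + 3 * mu + 1.
Proof.
  intros. unfold G1. unfold Rminus. eapply Rle_trans. apply abs3.
  rewrite !Rabs_Ropp, !Rabs_mult, (Rabs_right beta), (Rabs_right mu) by lra.
  pose proof (Rabs_pos a); pose proof (Rabs_pos b).
  assert (Rabs a * Rabs b <= 4) by nra. nra.
Qed.

Lemma G2_bnd beta mu p a b : 0 < beta -> 0 < mu -> 0 < p < 1 -> Rabs a <= 2 -> Rabs b <= 2 ->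
  Rabs (G2 beta mu p a b) <= 14 * beta + 3 * mu + 1.
Proof.
  intros. unfold G2. unfold Rminus at 2. eapply Rle_trans. apply Rabs_triang.
  rewrite !Rabs_Ropp, !Rabs_mult, (Rabs_right beta), (Rabs_right mu) by lra.
  assert (Rabs (p * a + (1 - a - b)) <= 7).
  { assert (-2 <= a <= 2) by (unfold Rabs in *; destruct (Rcase_abs a); lra).
    assert (-2 <= b <= 2) by (unfold Rabs in *; destruct (Rcase_abs b); lra).
    apply Rabs_le. split; nra. }
  pose proof (Rabs_pos b). pose proof (Rabs_pos (p * a + (1 - a - b))).
  assert (Rabs (p * a + (1 - a - b)) * Rabs b <= 14) by nra.
  assert (beta * Rabs (p * a + (1 - a - b)) * Rabs b <= beta * 14) by (rewrite Rmult_assoc; apply Rmult_le_compat_l; lra).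
  replace (1 - a + - b) with (1 - a - b) by ring. nra.
Qed.

Lemma goodF beta mu p : 0 < beta -> 0 < mu -> 0 < p < 1 ->
  good (fun u v => G1 beta mu (clamp u) (clamp v)) (fun u v => G2 beta mu p (clamp u) (clamp v))
       (7 * beta + 2 * mu + 1) (14 * beta + 3 * mu + 1).
Proof.
  intros hb hm hp. split; [lra|]. split; [lra|].
  assert (K : forall u v u' v', (7 * beta + 2 * mu + 1) * (Rabs (clamp u - clamp u') + Rabs (clamp v - clamp v'))
     <= (7 * beta + 2 * mu + 1) * (Rabs (u - u') + Rabs (v - v'))).
  { intros. apply Rmult_le_compat_l. lra. pose proof (clamp_lip u u'). pose proof (clamp_lip v v'). lra. }
  split; [|split; [|split]].
  - intros. eapply Rle_trans. apply G1_lip; auto; apply clamp_bnd. apply K.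
  - intros. eapply Rle_trans. apply G2_lip; auto; apply clamp_bnd. apply K.
  - intros. apply G1_bnd; auto; apply clamp_bnd.
  - intros. apply G2_bnd; auto; apply clamp_bnd.
Qed.

Theorem sol_exists beta mu p u0 v0 : 0 < beta -> 0 < mu -> 0 < p < 1 ->
  0 <= u0 -> 0 <= v0 -> u0 + v0 <= 1 ->
  exists x0 x1 x2, solution beta mu p x0 x1 x2 /\ x0 0 = u0 /\ x1 0 = 1 - u0 - v0 /\ x2 0 = v0.
Proof.
  intros hb hm hp hu hv huv.
  destruct (picard _ _ _ _ u0 v0 (goodF beta mu p hb hm hp)) as [U [V [U0 [V0 HD]]]].
  set (K := 7 * beta + mu + 1).
  assert (HU : forall t, 0 <= t -> 0 <= U t).
  { apply (barrier U (fun t => G1 beta mu (clamp (U t)) (clamp (V t))) (Rmin 1 (mu / (4 * beta)))).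
    - apply Rmin_glb_lt. lra. apply Rdiv_lt_0_compat; lra.
    - intros t ht; apply HD; auto.
    - lra.
    - intros t ht [h1 h2].
      assert (e1 : Rmin 1 (mu / (4 * beta)) <= 1) by apply Rmin_l.
      assert (e2 : Rmin 1 (mu / (4 * beta)) <= mu / (4 * beta)) by apply Rmin_r.
      rewrite (clamp_id (U t)) by lra. unfold G1.
      pose proof (clamp_bnd (V t)).
      assert (-2 <= clamp (V t) <= 2) by (unfold Rabs in *; destruct (Rcase_abs (clamp (V t))); lra).
      assert (4 * beta * (- U t) <= mu).
      { apply Rle_trans with (4 * beta * (mu / (4 * beta))). apply Rmult_le_compat_l; lra.
        right; field; lra. }
      nra. }
  assert (HV : forall t, 0 <= t -> 0 <= V t).
  { assert (forall t, 0 <= t -> 0 <= V t * exp (- K * t)).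
    { apply (barrier (fun t => V t * exp (- K * t))
        (fun t => G2 beta mu p (clamp (U t)) (clamp (V t)) * exp (- K * t) + V t * (- K * exp (- K * t))) 1).
      - lra.
      - intros t ht. apply dpl_mul_exp. apply HD; auto.
      - rewrite Rmult_0_r, exp_0. lra.
      - intros t ht [h1 h2]. assert (he : 0 < exp (- K * t)) by apply exp_pos.
        assert (hV : V t < 0) by (destruct (Rle_or_lt 0 (V t)); auto; nra).
        destruct (clamp_neg _ hV) as [c1 c2].
        pose proof (clamp_bnd (U t)) as cu. pose proof (clamp_bnd (V t)) as cv.
        assert (-2 <= clamp (U t) <= 2) by (unfold Rabs in *; destruct (Rcase_abs (clamp (U t))); lra).
        assert (-2 <= clamp (V t) <= 2) by (unfold Rabs in *; destruct (Rcase_abs (clamp (V t))); lra).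
        set (g := beta * (p * clamp (U t) + (1 - clamp (U t) - clamp (V t))) - mu).
        assert (hg : g <= K).
        { unfold g, K. assert (p * clamp (U t) <= 2) by nra. nra. }
        assert (E : G2 beta mu p (clamp (U t)) (clamp (V t)) = clamp (V t) * g) by (unfold G2, g; ring).
        rewrite E.
        replace (clamp (V t) * g * exp (- K * t) + V t * (- K * exp (- K * t))) with
          ((clamp (V t) * g - K * V t) * exp (- K * t)) by ring.
        apply Rmult_le_pos; [|lra].
        assert (clamp (V t) * g >= clamp (V t) * K) by nra.
        assert (K * clamp (V t) >= K * V t) by (unfold K; nra).
        lra. }
    intros t ht. specialize (H t ht). assert (0 < exp (- K * t)) by apply exp_pos. nra. }
  assert (HW : forall t, 0 <= t -> 0 <= 1 - U t - V t).
  { apply (barrier (fun t => 1 - U t - V t)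
      (fun t => 0 - G1 beta mu (clamp (U t)) (clamp (V t)) - G2 beta mu p (clamp (U t)) (clamp (V t))) 1).
    - lra.
    - intros t ht. destruct (HD t ht). apply dpl_sub; auto. apply dpl_sub; auto. apply dpl_const.
    - lra.
    - intros t ht [h1 h2]. specialize (HU t ht). specialize (HV t ht).
      rewrite !clamp_id by lra. unfold G1, G2.
      replace (0 - (mu - beta * U t * V t - mu * U t) - (beta * (p * U t + (1 - U t - V t)) * V t - mu * V t))
        with ((1 - p) * beta * U t * V t - beta * (1 - U t - V t) * V t - mu * (1 - U t - V t)) by ring.
      assert (0 <= (1 - p) * beta * U t * V t).
      { apply Rmult_le_pos; auto. apply Rmult_le_pos; auto. apply Rmult_le_pos; lra. }
      assert (0 <= - (beta * (1 - U t - V t) * V t)).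
      { replace (- (beta * (1 - U t - V t) * V t)) with (beta * (- (1 - U t - V t)) * V t) by ring.
        apply Rmult_le_pos; auto. apply Rmult_le_pos; lra. }
      nra. }
  exists U, (fun t => 1 - U t - V t), V. split; [|split; [|split]]; auto.
  - intros t ht. destruct (HD t ht) as [d1 d2]. specialize (HU t ht). specialize (HV t ht). specialize (HW t ht).
    rewrite !clamp_id in d1, d2 by lra.
    split; [|split].
    + apply (dpl_eq _ _ _ _ d1). unfold G1, f0. ring.
    + eapply dpl_eq. apply dpl_sub. apply dpl_sub. apply dpl_const. exact d1. exact d2.
      unfold G1, G2, f1. ring.
    + apply (dpl_eq _ _ _ _ d2). unfold G2, f2. ring.
  - rewrite U0, V0. auto.
Qed.

Lemma dist3_lt (x y : pt) d : dist3 x y < d ->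
  Rabs (pS0 x - pS0 y) < d /\ Rabs (pS1 x - pS1 y) < d /\ Rabs (pA x - pA y) < d.
Proof.
  unfold dist3. intros H.
  pose proof (Rmax_l (Rabs (pS0 x - pS0 y)) (Rmax (Rabs (pS1 x - pS1 y)) (Rabs (pA x - pA y)))).
  pose proof (Rmax_r (Rabs (pS0 x - pS0 y)) (Rmax (Rabs (pS1 x - pS1 y)) (Rabs (pA x - pA y)))).
  pose proof (Rmax_l (Rabs (pS1 x - pS1 y)) (Rabs (pA x - pA y))).
  pose proof (Rmax_r (Rabs (pS1 x - pS1 y)) (Rabs (pA x - pA y))). lra.
Qed.

Lemma dist3_lt' (x y : pt) d :
  Rabs (pS0 x - pS0 y) < d -> Rabs (pS1 x - pS1 y) < d -> Rabs (pA x - pA y) < d -> dist3 x y < d.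
Proof. intros. unfold dist3. apply Rmax_lub_lt; auto. apply Rmax_lub_lt; auto. Qed.

Lemma sq_lt x e : 0 < e -> x ^ 2 < e ^ 2 -> Rabs x < e.
Proof. intros he h. rewrite <- pow2_abs in h. pose proof (Rabs_pos x). nra. Qed.

Lemma abs_sq_lt x d : Rabs x < d -> x ^ 2 < d ^ 2.
Proof. intros h. rewrite <- pow2_abs. pose proof (Rabs_pos x). nra. Qed.

Lemma close_of_V aw X Y eps : 0 < aw -> 0 < eps -> aw * X ^ 2 + Y ^ 2 < Rmin aw 1 * eps ^ 2 / 4 ->
  Rabs X < eps / 2 /\ Rabs Y < eps / 2 /\ Rabs (X + Y) < eps.
Proof.
  intros ha he H. assert (m1 : Rmin aw 1 <= aw) by apply Rmin_l. assert (m2 : Rmin aw 1 <= 1) by apply Rmin_r.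
  assert (m3 : 0 < Rmin aw 1) by (apply Rmin_glb_lt; lra).
  pose proof (pow2_ge_0 X). pose proof (pow2_ge_0 Y). pose proof (pow2_ge_0 eps).
  assert (hx : X ^ 2 < (eps / 2) ^ 2).
  { assert (aw * X ^ 2 < aw * (eps ^ 2 / 4)) by nra. replace ((eps / 2) ^ 2) with (eps ^ 2 / 4) by field. nra. }
  assert (hy : Y ^ 2 < (eps / 2) ^ 2).
  { replace ((eps / 2) ^ 2) with (eps ^ 2 / 4) by field. nra. }
  apply sq_lt in hx; [|lra]. apply sq_lt in hy; [|lra].
  split; auto. split; auto. eapply Rle_lt_trans. apply Rabs_triang. lra.
Qed.

Lemma las_gen beta mu p s a eta aw : 0 < beta -> 0 < mu -> 0 < p < 1 -> 0 <= a -> 0 <= eta -> a * eta = 0 ->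
  mu - s * (beta * a + mu) = 0 -> beta * (1 - (1 - p) * s - a) - mu = - eta -> 0 < a * beta + eta ->
  0 < aw -> 0 < 4 * aw * (beta * a + mu) * (a * beta + eta) - (aw * (beta * s) + a * (beta * (1 - p))) ^ 2 ->
  loc_asym_stable beta mu p (s, 1 - s - a, a).
Proof.
  intros hb hm hp ha heta hae R1 R2 he haw hD.
  destruct (stab2 (beta * a + mu) (beta * s) beta (a * (beta * (1 - p))) (a * beta + eta) (beta * (1 - p)) beta aw
    haw ltac:(nra) he hD) as [r [k [hr [hk HS]]]].
  assert (DER : forall x0 x1 x2, solution beta mu p x0 x1 x2 -> in_simplex (traj x0 x1 x2 0) ->
    forall t, 0 <= t ->
     derivable_pt_lim (fun t => x0 t - s) t (- (beta * a + mu) * (x0 t - s) - beta * s * (x2 t - a) - beta * (x0 t - s) * (x2 t - a)) /\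
     derivable_pt_lim (fun t => x2 t - a) t (- (a * (beta * (1 - p))) * (x0 t - s) - (a * beta + eta) * (x2 t - a)
        - (x2 t - a) * (beta * (1 - p) * (x0 t - s) + beta * (x2 t - a)))).
  { intros x0 x1 x2 Hs Hin t ht.
    assert (hsum : x0 t + x1 t + x2 t = 1).
    { apply (sum_inv beta mu p); auto. destruct Hin as [_ [_ [_ h]]]. exact h. }
    destruct (Hs t ht) as [d0 [d1 d2]]. split.
    - eapply dpl_eq. apply dpl_sub. exact d0. apply dpl_const. unfold f0.
      match goal with |- ?L = ?R => assert (L - R = mu - s * (beta * a + mu)) by ring end. lra.
    - eapply dpl_eq. apply dpl_sub. exact d2. apply dpl_const. unfold f2.
      replace (x1 t) with (1 - x0 t - x2 t) by lra.
      match goal with |- ?L = ?R => assert (E : L - R = x2 t * (beta * (1 - (1 - p) * s - a) - mu + eta) - a * eta) by ring end.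
      rewrite R2, hae in E. replace (- eta + eta) with 0 in E by ring. rewrite Rmult_0_r in E. lra. }
  set (th := fun eps => Rmin aw 1 * eps ^ 2 / 4).
  assert (hth : forall eps, 0 < eps -> 0 < th eps).
  { intros eps he'. unfold th. apply Rdiv_lt_0_compat; [|lra]. apply Rmult_lt_0_compat. apply Rmin_glb_lt; lra. nra. }
  assert (V0 : forall x0 x1 x2 d, 0 < d <= 1 -> dist3 (traj x0 x1 x2 0) (s, 1 - s - a, a) < d ->
     aw * (x0 0 - s) ^ 2 + (x2 0 - a) ^ 2 < (aw + 1) * d).
  { intros x0 x1 x2 d hd H. apply dist3_lt in H. destruct H as [h0 [_ h2]]. simpl in h0, h2.
    unfold pS0, pA in h0, h2; simpl in h0, h2.
    apply abs_sq_lt in h0. apply abs_sq_lt in h2.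
    assert (d ^ 2 <= d) by nra. nra. }
  assert (CL : forall x0 x1 x2 t eps, 0 < eps -> 0 <= t -> x0 t + x1 t + x2 t = 1 ->
     aw * (x0 t - s) ^ 2 + (x2 t - a) ^ 2 < th eps -> dist3 (traj x0 x1 x2 t) (s, 1 - s - a, a) < eps).
  { intros x0 x1 x2 t eps he' ht hs H. destruct (close_of_V aw _ _ eps haw he' H) as [c1 [c2 c3]].
    apply dist3_lt'; unfold pS0, pS1, pA; simpl; try lra.
    replace (x1 t - (1 - s - a)) with (- ((x0 t - s) + (x2 t - a))) by lra. rewrite Rabs_Ropp. auto. }
  split.
  - intros eps he'. exists (Rmin 1 (Rmin r (th eps) / (aw + 1))). split.
    { apply Rmin_glb_lt. lra. apply Rdiv_lt_0_compat. apply Rmin_glb_lt; auto. lra. }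
    intros x0 x1 x2 Hs Hin Hd t ht.
    set (d := Rmin 1 (Rmin r (th eps) / (aw + 1))) in *.
    assert (hd : 0 < d <= 1).
    { split. apply Rmin_glb_lt. lra. apply Rdiv_lt_0_compat. apply Rmin_glb_lt; auto. lra. apply Rmin_l. }
    assert (hd2 : (aw + 1) * d <= Rmin r (th eps)).
    { assert (d <= Rmin r (th eps) / (aw + 1)) by apply Rmin_r.
      apply Rmult_le_compat_l with (r := aw + 1) in H; [|lra].
      replace ((aw + 1) * (Rmin r (th eps) / (aw + 1))) with (Rmin r (th eps)) in H by (field; lra). exact H. }
    pose proof (V0 x0 x1 x2 d hd Hd) as HV0.
    assert (Rmin r (th eps) <= r) by apply Rmin_l. assert (Rmin r (th eps) <= th eps) by apply Rmin_r.
    destruct (HS (fun t => x0 t - s) (fun t => x2 t - a) (DER x0 x1 x2 Hs Hin) ltac:(cbv beta; lra) t ht) as [h1 h2].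
    apply CL; auto. apply (sum_inv beta mu p); auto. destruct Hin as [_ [_ [_ h]]]. exact h. lra.
  - exists (Rmin 1 (r / (aw + 1))). split.
    { apply Rmin_glb_lt. lra. apply Rdiv_lt_0_compat; lra. }
    intros x0 x1 x2 Hs Hin Hd eps he'.
    set (d := Rmin 1 (r / (aw + 1))) in *.
    assert (hd : 0 < d <= 1).
    { split. apply Rmin_glb_lt. lra. apply Rdiv_lt_0_compat; lra. apply Rmin_l. }
    assert (hd2 : (aw + 1) * d <= r).
    { assert (d <= r / (aw + 1)) by apply Rmin_r.
      apply Rmult_le_compat_l with (r := aw + 1) in H; [|lra].
      replace ((aw + 1) * (r / (aw + 1))) with r in H by (field; lra). exact H. }
    pose proof (V0 x0 x1 x2 d hd Hd) as HV0.
    set (W0 := aw * (x0 0 - s) ^ 2 + (x2 0 - a) ^ 2) in *.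
    assert (hW0 : 0 <= W0) by (unfold W0; pose proof (pow2_ge_0 (x0 0 - s)); pose proof (pow2_ge_0 (x2 0 - a)); nra).
    pose proof (hth eps he').
    exists (W0 / (k * th eps)). intros t ht.
    assert (ht0 : 0 <= t).
    { eapply Rle_trans; [|exact ht]. apply Rdiv_le_0_compat; auto. apply Rmult_lt_0_compat; auto. }
    destruct (HS (fun t => x0 t - s) (fun t => x2 t - a) (DER x0 x1 x2 Hs Hin) ltac:(cbv beta; fold W0; lra) t ht0) as [h1 h2].
    fold W0 in h1, h2. cbv beta in h1, h2.
    apply CL; auto. apply (sum_inv beta mu p); auto. destruct Hin as [_ [_ [_ h]]]. exact h.
    set (Vt := aw * (x0 t - s) ^ 2 + (x2 t - a) ^ 2) in *.
    assert (hVt : 0 <= Vt) by (unfold Vt; pose proof (pow2_ge_0 (x0 t - s)); pose proof (pow2_ge_0 (x2 t - a)); nra).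
    assert (k * t * th eps >= W0).
    { assert (W0 / (k * th eps) * (k * th eps) = W0) by (field; lra).
      assert (t * (k * th eps) >= W0 / (k * th eps) * (k * th eps)).
      { apply Rle_ge. apply Rmult_le_compat_r. apply Rlt_le, Rmult_lt_0_compat; auto. auto. }
      nra. }
    destruct (Rlt_or_le Vt (th eps)) as [ok|bad]; auto.
    exfalso. assert (Vt * (1 + k * t) >= th eps * (1 + k * t)).
    { apply Rle_ge, Rmult_le_compat_r; nra. }
    nra.
Qed.

Lemma der_gen beta mu p s a eta x0 x1 x2 : a * eta = 0 ->
  mu - s * (beta * a + mu) = 0 -> beta * (1 - (1 - p) * s - a) - mu = - eta ->
  solution beta mu p x0 x1 x2 -> in_simplex (traj x0 x1 x2 0) ->
    forall t, 0 <= t ->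
     derivable_pt_lim (fun t => x0 t - s) t (- (beta * a + mu) * (x0 t - s) - beta * s * (x2 t - a) - beta * (x0 t - s) * (x2 t - a)) /\
     derivable_pt_lim (fun t => x2 t - a) t (- (a * (beta * (1 - p))) * (x0 t - s) - (a * beta + eta) * (x2 t - a)
        - (x2 t - a) * (beta * (1 - p) * (x0 t - s) + beta * (x2 t - a))).
Proof.
  intros hae R1 R2 Hs Hin t ht.
  assert (hsum : x0 t + x1 t + x2 t = 1).
  { apply (sum_inv beta mu p); auto. destruct Hin as [_ [_ [_ h]]]. exact h. }
  destruct (Hs t ht) as [d0 [d1 d2]]. split.
  - eapply dpl_eq. apply dpl_sub. exact d0. apply dpl_const. unfold f0.
    match goal with |- ?L = ?R => assert (L - R = mu - s * (beta * a + mu)) by ring end. lra.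
  - eapply dpl_eq. apply dpl_sub. exact d2. apply dpl_const. unfold f2.
    replace (x1 t) with (1 - x0 t - x2 t) by lra.
    match goal with |- ?L = ?R => assert (E : L - R = x2 t * (beta * (1 - (1 - p) * s - a) - mu + eta) - a * eta) by ring end.
    rewrite R2, hae in E. replace (- eta + eta) with 0 in E by ring. rewrite Rmult_0_r in E. lra.
Qed.

Lemma unst_saddle beta mu p s a : 0 < beta -> 0 < mu -> 0 < p < 1 -> 0 < s -> 0 < a -> 0 <= 1 - s - a ->
  mu - s * (beta * a + mu) = 0 -> beta * (1 - (1 - p) * s - a) - mu = 0 ->
  beta * a + mu < beta * (1 - p) * s -> unstable beta mu p (s, 1 - s - a, a).
Proof.
  intros hb hm hp hs ha h1 R1 R2 hc.
  assert (hbc : 0 < beta * s * (a * (beta * (1 - p))) - (beta * a + mu) * (a * beta + 0)).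
  { replace (beta * s * (a * (beta * (1 - p))) - (beta * a + mu) * (a * beta + 0))
      with (a * beta * (beta * (1 - p) * s - (beta * a + mu))) by ring.
    apply Rmult_lt_0_compat. nra. lra. }
  destruct (unst_sad (beta * a + mu) (beta * s) beta (a * (beta * (1 - p))) (a * beta + 0) (beta * (1 - p)) beta
     ltac:(nra) ltac:(nra) ltac:(nra) ltac:(nra) hbc) as [rho [hrho HU]].
  intros Hst. destruct (Hst rho hrho) as [d [hd Hd]].
  set (h := Rmin (d / 2) (s / 2)).
  assert (hh : 0 < h) by (unfold h; apply Rmin_glb_lt; lra).
  assert (hh1 : h <= d / 2) by apply Rmin_l. assert (hh2 : h <= s / 2) by apply Rmin_r.
  destruct (sol_exists beta mu p (s - h) a hb hm hp ltac:(lra) ltac:(lra) ltac:(lra)) as [x0 [x1 [x2 [Hs [e0 [e1 e2]]]]]].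
  assert (Hin : in_simplex (traj x0 x1 x2 0)).
  { unfold in_simplex, traj, pS0, pS1, pA; simpl. rewrite e0, e1, e2. repeat split; lra. }
  assert (Hd0 : dist3 (traj x0 x1 x2 0) (s, 1 - s - a, a) < d).
  { apply dist3_lt'; unfold traj, pS0, pS1, pA; simpl; rewrite ?e0, ?e1, ?e2.
    - replace (s - h - s) with (- h) by ring. rewrite Rabs_Ropp, Rabs_right; lra.
    - replace (1 - (s - h) - a - (1 - s - a)) with h by ring. rewrite Rabs_right; lra.
    - rewrite Rminus_diag, Rabs_R0; lra. }
  pose proof (HU (fun t => x0 t - s) (fun t => x2 t - a)) as HU'.
  assert (HW : a * beta + 0 > 0) by nra.
  assert (C : a * beta + 0 / (beta * s) * (x0 0 - s) ^ 2 - 2 * (x0 0 - s) * (x2 0 - a) + (beta * a + mu) / (a * (beta * (1 - p))) * (x2 0 - a) ^ 2 <= 0 \/ True) by (right; auto).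
  clear C.
  assert (L : (a * beta + 0) / (beta * s) * (x0 0 - s) ^ 2 - 2 * (x0 0 - s) * (x2 0 - a) +
              (beta * a + mu) / (a * (beta * (1 - p))) * (x2 0 - a) ^ 2 <= 0).
  { apply HU'.
    - intros t ht. destruct (der_gen beta mu p s a 0 x0 x1 x2 ltac:(ring) R1 ltac:(lra) Hs Hin t ht) as [q1 q2].
      split. exact q1. exact q2.
    - intros t ht. specialize (Hd x0 x1 x2 Hs Hin Hd0 t ht). apply dist3_lt in Hd.
      destruct Hd as [q0 [_ q2]]. unfold traj, pS0, pA in q0, q2; simpl in q0, q2. auto. }
  rewrite e0, e2 in L. replace (s - h - s) with (- h) in L by ring. rewrite Rminus_diag in L.
  assert (0 < (a * beta + 0) / (beta * s)) by (apply Rdiv_lt_0_compat; nra).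
  assert (0 < h ^ 2) by nra.
  replace ((- h) ^ 2) with (h ^ 2) in L by ring.
  replace (0 ^ 2) with 0 in L by ring. nra.
Qed.

Lemma unst_E0 beta mu p : 0 < beta -> 0 < mu -> 0 < p < 1 -> mu < beta * p -> unstable beta mu p E0.
Proof.
  intros hb hm hp hc.
  destruct (unst_e0 (0 * beta + (mu - beta * p)) (beta * (1 - p)) beta ltac:(lra)) as [rho [hrho HU]].
  intros Hst. destruct (Hst rho hrho) as [d [hd Hd]].
  set (h := Rmin (d / 2) (1 / 2)).
  assert (hh : 0 < h) by (unfold h; apply Rmin_glb_lt; lra).
  assert (hh1 : h <= d / 2) by apply Rmin_l. assert (hh2 : h <= 1 / 2) by apply Rmin_r.
  destruct (sol_exists beta mu p (1 - h) h hb hm hp ltac:(lra) ltac:(lra) ltac:(lra)) as [x0 [x1 [x2 [Hs [e0 [e1 e2]]]]]].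
  assert (Hin : in_simplex (traj x0 x1 x2 0)).
  { unfold in_simplex, traj, pS0, pS1, pA; simpl. rewrite e0, e1, e2. repeat split; lra. }
  assert (Hd0 : dist3 (traj x0 x1 x2 0) E0 < d).
  { apply dist3_lt'; unfold traj, E0, pS0, pS1, pA; simpl; rewrite ?e0, ?e1, ?e2.
    - replace (1 - h - 1) with (- h) by ring. rewrite Rabs_Ropp, Rabs_right; lra.
    - replace (1 - (1 - h) - h - 0) with 0 by ring. rewrite Rabs_R0; lra.
    - rewrite Rminus_0_r, Rabs_right; lra. }
  assert (L : x2 0 - 0 = 0).
  { apply (HU (fun t => x0 t - 1) (fun t => x2 t - 0)).
    - intros t ht. destruct (der_gen beta mu p 1 0 (mu - beta * p) x0 x1 x2 ltac:(ring) ltac:(ring) ltac:(ring) Hs Hin t ht) as [q1 q2].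
      eapply dpl_eq. exact q2. ring.
    - intros t ht. specialize (Hd x0 x1 x2 Hs Hin Hd0 t ht). apply dist3_lt in Hd.
      destruct Hd as [q0 [_ q2]]. unfold traj, E0, pS0, pA in q0, q2; simpl in q0, q2. auto. }
  rewrite e2 in L. lra.
Qed.

Lemma rel_R beta mu p a : 0 < beta -> 0 < mu -> 0 < beta / mu * a + 1 ->
  (2 * a - 1 + 2 / (beta / mu)) ^ 2 = 1 - 4 * (1 - p) / (beta / mu) ->
  mu - 1 / (beta / mu * a + 1) * (beta * a + mu) = 0 /\
  beta * (1 - (1 - p) * (1 / (beta / mu * a + 1)) - a) - mu = 0.
Proof.
  intros hb hm hu hq. set (d := beta / mu) in *. set (u := d * a + 1) in *.
  assert (hd : 0 < d) by (unfold d; apply Rdiv_lt_0_compat; auto).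
  assert (hbd : beta = d * mu) by (unfold d; field; lra).
  assert (H' : (2 * u - d) ^ 2 = d ^ 2 - 4 * d * (1 - p)).
  { replace (2 * u - d) with (d * (2 * a - 1 + 2 / d)) by (unfold u; field; lra).
    rewrite Rpow_mult_distr, hq. field. lra. }
  split.
  - rewrite hbd. replace (d * mu * a + mu) with (mu * u) by (unfold u; ring). field. lra.
  - rewrite hbd. apply Rmult_eq_reg_r with u; [|lra].
    replace a with ((u - 1) / d) by (unfold u; field; lra).
    field_simplify.
    + replace (d * mu * p + d * mu * u - d * mu - mu * u ^ 2) with (mu * (d * p + d * u - d - u ^ 2)) by ring.
      assert (E : d * p + d * u - d - u ^ 2 = 0) by nra. rewrite E; ring.
    + split; lra.
Qed.

Lemma endemic_bwd beta mu p a : 0 < beta -> 0 < mu -> 0 < a ->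
  0 <= 1 - 1 / (beta / mu * a + 1) - a ->
  (2 * a - 1 + 2 / (beta / mu)) ^ 2 = 1 - 4 * (1 - p) / (beta / mu) ->
  endemic beta mu p (Epoint (beta / mu) a).
Proof.
  intros hb hm ha hS1 hq.
  assert (hd : 0 < beta / mu) by (apply Rdiv_lt_0_compat; auto).
  assert (hu : 0 < beta / mu * a + 1) by nra.
  destruct (rel_R beta mu p a hb hm hu hq) as [R1 R2].
  set (s := 1 / (beta / mu * a + 1)) in *.
  assert (hs : 0 < s) by (unfold s; apply Rdiv_lt_0_compat; lra).
  unfold endemic, Epoint, in_simplex, is_equilibrium, pS0, pS1, pA. simpl. fold s.
  assert (F0 : f0 beta mu p s (1 - s - a) a = 0) by (unfold f0; rewrite <- R1; ring).
  assert (F2 : f2 beta mu p s (1 - s - a) a = 0).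
  { unfold f2. replace (beta * (p * s + (1 - s - a)) * a - mu * a) with (a * (beta * (1 - (1 - p) * s - a) - mu)) by ring.
    rewrite R2; ring. }
  assert (F1 : f1 beta mu p s (1 - s - a) a = 0).
  { replace (f1 beta mu p s (1 - s - a) a) with (- (f0 beta mu p s (1 - s - a) a + f2 beta mu p s (1 - s - a) a))
      by (unfold f0, f1, f2; ring). rewrite F0, F2; ring. }
  repeat split; try lra.
Qed.

Lemma endemic_fwd beta mu p x : 0 < beta -> 0 < mu -> endemic beta mu p x ->
  0 < pA x /\ 0 <= 1 - 1 / (beta / mu * pA x + 1) - pA x /\
  (2 * pA x - 1 + 2 / (beta / mu)) ^ 2 = 1 - 4 * (1 - p) / (beta / mu) /\
  x = Epoint (beta / mu) (pA x).
Proof.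
  intros hb hm. destruct x as [[S0 S1] A]. unfold endemic, in_simplex, is_equilibrium, pS0, pS1, pA, Epoint; simpl.
  intros [[h0 [h1 [h2 hs]]] [hA [F0 [F1 F2]]]]. unfold f0, f2 in F0, F2.
  set (d := beta / mu).
  assert (hd : 0 < d) by (unfold d; apply Rdiv_lt_0_compat; auto).
  assert (hbd : beta = d * mu) by (unfold d; field; lra).
  assert (hu : 0 < d * A + 1) by nra.
  assert (e0 : S0 * (d * A + 1) = 1).
  { rewrite hbd in F0. apply Rmult_eq_reg_l with mu; [|lra].
    replace (mu * (S0 * (d * A + 1))) with (mu - (mu - d * mu * S0 * A - mu * S0)) by ring. rewrite F0. ring. }
  assert (e0' : S0 = 1 / (d * A + 1)) by (apply Rmult_eq_reg_r with (d * A + 1); [|lra]; rewrite e0; field; lra).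
  assert (e2 : d * (p * S0 + S1) = 1).
  { rewrite hbd in F2. apply Rmult_eq_reg_l with (mu * A); [|nra].
    replace (mu * A * (d * (p * S0 + S1))) with (d * mu * (p * S0 + S1) * A - mu * A + mu * A) by ring.
    rewrite F2. ring. }
  assert (hS1 : S1 = 1 - S0 - A) by lra.
  assert (Q : (2 * (d * A + 1) - d) ^ 2 = d ^ 2 - 4 * d * (1 - p)).
  { rewrite hS1 in e2. assert (E : d * (p * S0 * (d * A + 1) + (1 - A) * (d * A + 1) - S0 * (d * A + 1)) = d * A + 1).
    { replace (d * (p * S0 * (d * A + 1) + (1 - A) * (d * A + 1) - S0 * (d * A + 1))) with
        (d * (p * S0 + (1 - S0 - A)) * (d * A + 1)) by ring. rewrite e2. ring. }
    replace (p * S0 * (d * A + 1)) with (p * (S0 * (d * A + 1))) in E by ring.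
    rewrite e0 in E. nra. }
  split; auto. split. rewrite <- e0'. lra. split.
  - replace (2 * A - 1 + 2 / d) with ((2 * (d * A + 1) - d) / d) by (field; lra).
    replace ((2 * (d * A + 1) - d) / d * ((2 * (d * A + 1) - d) / d * 1)) with ((2 * (d * A + 1) - d) ^ 2 / d ^ 2) by (field; lra). rewrite Q. field. lra.
  - rewrite <- e0'. f_equal. f_equal. lra.
Qed.

Lemma stable_E beta mu p a : 0 < beta -> 0 < mu -> 0 < p < 1 -> 0 < a ->
  (2 * a - 1 + 2 / (beta / mu)) ^ 2 = 1 - 4 * (1 - p) / (beta / mu) ->
  beta / mu * (1 - p) < (beta / mu * a + 1) ^ 2 ->
  loc_asym_stable beta mu p (Epoint (beta / mu) a).
Proof.
  intros hb hm hp ha hq hc.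
  assert (hd : 0 < beta / mu) by (apply Rdiv_lt_0_compat; auto).
  assert (hu : 0 < beta / mu * a + 1) by nra.
  destruct (rel_R beta mu p a hb hm hu hq) as [R1 R2].
  set (d := beta / mu) in *. set (u := d * a + 1) in *.
  assert (hbd : beta = d * mu) by (unfold d; field; lra).
  set (s := 1 / u) in *.
  assert (hs : 0 < s) by (unfold s; apply Rdiv_lt_0_compat; lra).
  unfold Epoint. fold d. fold u. fold s.
  apply (las_gen beta mu p s a 0 (a * (1 - p) / s)); auto; try lra; try nra.
  - apply Rdiv_lt_0_compat; nra.
  - assert (hc' : beta * (1 - p) * s < beta * a + mu).
    { unfold s. rewrite hbd. replace (d * mu * a + mu) with (mu * u) by (unfold u; ring).
      apply Rmult_lt_reg_r with u; [lra|]. replace (d * mu * (1 - p) * (1 / u) * u) with (mu * (d * (1 - p))) by (field; lra).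
      replace (mu * u * u) with (mu * u ^ 2) by ring. apply Rmult_lt_compat_l; auto. }
    replace (4 * (a * (1 - p) / s) * (beta * a + mu) * (a * beta + 0) - (a * (1 - p) / s * (beta * s) + a * (beta * (1 - p))) ^ 2)
      with (4 * (a * a * beta * (1 - p) / s) * (beta * a + mu - beta * (1 - p) * s)) by (field; lra).
    apply Rmult_lt_0_compat. apply Rmult_lt_0_compat. lra. apply Rdiv_lt_0_compat; [|lra].
    apply Rmult_lt_0_compat; [apply Rmult_lt_0_compat; [apply Rmult_lt_0_compat|]|]; lra. lra.
Qed.

Lemma unstable_E beta mu p a : 0 < beta -> 0 < mu -> 0 < p < 1 -> 0 < a ->
  0 <= 1 - 1 / (beta / mu * a + 1) - a ->
  (2 * a - 1 + 2 / (beta / mu)) ^ 2 = 1 - 4 * (1 - p) / (beta / mu) ->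
  (beta / mu * a + 1) ^ 2 < beta / mu * (1 - p) ->
  unstable beta mu p (Epoint (beta / mu) a).
Proof.
  intros hb hm hp ha hS1 hq hc.
  assert (hd : 0 < beta / mu) by (apply Rdiv_lt_0_compat; auto).
  assert (hu : 0 < beta / mu * a + 1) by nra.
  destruct (rel_R beta mu p a hb hm hu hq) as [R1 R2].
  set (d := beta / mu) in *. set (u := d * a + 1) in *.
  assert (hbd : beta = d * mu) by (unfold d; field; lra).
  set (s := 1 / u) in *.
  assert (hs : 0 < s) by (unfold s; apply Rdiv_lt_0_compat; lra).
  unfold Epoint. fold d. fold u. fold s.
  apply unst_saddle; auto.
  unfold s. rewrite hbd. replace (d * mu * a + mu) with (mu * u) by (unfold u; ring).
  apply Rmult_lt_reg_r with u; [lra|]. replace (d * mu * (1 - p) * (1 / u) * u) with (mu * (d * (1 - p))) by (field; lra).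
  replace (mu * u * u) with (mu * u ^ 2) by ring. apply Rmult_lt_compat_l; auto.
Qed.

Lemma stable_E0 beta mu p : 0 < beta -> 0 < mu -> 0 < p < 1 -> beta * p < mu ->
  loc_asym_stable beta mu p E0.
Proof.
  intros hb hm hp hc. unfold E0.
  replace (1, 0, 0) with (1, 1 - 1 - 0, 0) by (f_equal; f_equal; ring).
  set (eta := mu - beta * p).
  apply (las_gen beta mu p 1 0 eta (2 * mu * eta / beta ^ 2)); unfold eta; try lra; try ring.
  - apply Rdiv_lt_0_compat; nra.
  - replace (4 * (2 * mu * (mu - beta * p) / beta ^ 2) * (beta * 0 + mu) * (0 * beta + (mu - beta * p)) -
      (2 * mu * (mu - beta * p) / beta ^ 2 * (beta * 1) + 0 * (beta * (1 - p))) ^ 2)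
      with (4 * mu ^ 2 * (mu - beta * p) ^ 2 / beta ^ 2) by (field; lra).
    assert (h1 : 0 < mu ^ 2) by nra. assert (h2 : 0 < (mu - beta * p) ^ 2) by nra. assert (h3 : 0 < beta ^ 2) by nra.
    apply Rdiv_lt_0_compat; auto. apply Rmult_lt_0_compat; auto. lra.
Qed.

Lemma S1_nonneg beta mu p a : 0 < beta -> 0 < mu -> 0 < a ->
  (2 * a - 1 + 2 / (beta / mu)) ^ 2 = 1 - 4 * (1 - p) / (beta / mu) ->
  p * (beta / mu) <= beta / mu * a + 1 -> 0 <= 1 - 1 / (beta / mu * a + 1) - a.
Proof.
  intros hb hm ha hq hc.
  assert (hd : 0 < beta / mu) by (apply Rdiv_lt_0_compat; auto).
  assert (hu : 0 < beta / mu * a + 1) by nra.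
  destruct (rel_R beta mu p a hb hm hu hq) as [R1 R2].
  set (d := beta / mu) in *. set (u := d * a + 1) in *.
  assert (hbd : beta = d * mu) by (unfold d; field; lra).
  rewrite hbd in R2.
  assert (E : 1 - 1 / u - a = 1 / d - p / u).
  { apply Rmult_eq_reg_l with (d * mu); [|nra].
    replace (d * mu * (1 - 1 / u - a)) with (d * mu * (1 - (1 - p) * (1 / u) - a) - mu + mu - d * mu * p / u) by (field; lra).
    rewrite R2. field. split; lra. }
  rewrite E. apply Rmult_le_reg_l with (d * u). nra.
  replace (d * u * (1 / d - p / u)) with (u - p * d) by (field; split; lra). lra.
Qed.

Lemma root_cases d p a : (2 * a - 1 + 2 / d) ^ 2 = 1 - 4 * (1 - p) / d ->
  a = A_plus d p \/ a = A_minus d p.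
Proof.
  intros hq. unfold A_plus, A_minus. rewrite <- hq. rewrite <- Rsqr_pow2, sqrt_Rsqr_abs.
  unfold Rabs. destruct (Rcase_abs (2 * a - 1 + 2 / d)); [right|left]; unfold Rdiv; set (w := / d); field.
Qed.

Lemma sq_mono x y : 0 <= x -> x < y -> x ^ 2 < y ^ 2.
Proof. intros. nra. Qed.

Lemma sq_gt x y : 0 <= x -> y ^ 2 < x ^ 2 -> y < x.
Proof. intros. destruct (Rlt_or_le y x); auto. nra. Qed.

Theorem mainTheorem2 (beta mu p : R)
  (hbeta : 0 < beta) (hmu : 0 < mu) (hp0 : 0 < p) (hp1 : p < 1) :
  let delta : R := (beta / mu)%R in
  let E1 : pt := Epoint delta (A_plus delta p) in
  let E2 : pt := Epoint delta (A_minus delta p) in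
  ((p < 1 / 2)%R ->
     (delta < 4 * (1 - p) ->
        (forall x, ~ endemic beta mu p x) /\ loc_asym_stable beta mu p E0) /\
     (4 * (1 - p) < delta < 1 / p ->
        (forall x, endemic beta mu p x <-> x = E1 \/ x = E2) /\ E1 <> E2 /\
        loc_asym_stable beta mu p E1 /\ unstable beta mu p E2 /\
        loc_asym_stable beta mu p E0) /\
     (1 / p <= delta ->
        (forall x, endemic beta mu p x <-> x = E1) /\
        loc_asym_stable beta mu p E1 /\
        (1 / p < delta -> unstable beta mu p E0))) /\
  (1 / 2 <= p ->
     (delta <= 1 / p -> forall x, ~ endemic beta mu p x) /\
     (delta < 1 / p -> loc_asym_stable beta mu p E0) /\
     (1 / p < delta ->
        (forall x, endemic beta mu p x <-> x = E1) /\
        loc_asym_stable beta mu p E1 /\ unstable beta mu p E0)).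
Proof.
  intros delta E1 E2.
  assert (hp : 0 < p < 1) by lra.
  assert (hd : 0 < delta) by (unfold delta; apply Rdiv_lt_0_compat; auto).
  assert (hbd : beta = delta * mu) by (unfold delta; field; lra).
  set (D := 1 - 4 * (1 - p) / delta).
  set (q := sqrt D).
  assert (hq0 : 0 <= q) by apply sqrt_pos.
  assert (HDd : D * delta = delta - 4 * (1 - p)) by (unfold D; field; lra).
  assert (HAp : delta * A_plus delta p + 1 = delta * (1 + q) / 2) by (unfold A_plus; fold D q; field; lra).
  assert (HAm : delta * A_minus delta p + 1 = delta * (1 - q) / 2) by (unfold A_minus; fold D q; field; lra).
  assert (HAp' : 2 * A_plus delta p - 1 + 2 / delta = q) by (unfold A_plus; fold D q; field; lra).
  assert (HAm' : 2 * A_minus delta p - 1 + 2 / delta = - q) by (unfold A_minus; fold D q; field; lra).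
  assert (Hc : delta * (1 - p) = delta ^ 2 * (1 - D) / 4) by (unfold D; field; lra).
  assert (Hq2 : 0 <= D -> q ^ 2 = D) by (intro; unfold q; rewrite <- Rsqr_pow2; apply Rsqr_sqrt; auto).
  assert (QP : 0 <= D -> (2 * A_plus delta p - 1 + 2 / (beta / mu)) ^ 2 = 1 - 4 * (1 - p) / (beta / mu)).
  { intro. fold delta. rewrite HAp'. fold D. auto. }
  assert (QM : 0 <= D -> (2 * A_minus delta p - 1 + 2 / (beta / mu)) ^ 2 = 1 - 4 * (1 - p) / (beta / mu)).
  { intro. fold delta. rewrite HAm'. fold D. replace ((- q) ^ 2) with (q ^ 2) by ring. auto. }
  assert (posA : forall a X, delta * a + 1 = X -> 1 < X -> 0 < a).
  { intros a X h1 h2. destruct (Rlt_or_le 0 a); auto. nra. }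
  assert (nposA : forall a X, delta * a + 1 = X -> X <= 1 -> a <= 0).
  { intros a X h1 h2. destruct (Rle_or_lt a 0); auto. nra. }
  assert (FWD : forall x, endemic beta mu p x -> 0 <= D /\ 0 < pA x /\
            (x = E1 /\ pA x = A_plus delta p \/ x = E2 /\ pA x = A_minus delta p)).
  { intros x Hx. destruct (endemic_fwd beta mu p x hbeta hmu Hx) as [h1 [h2 [h3 h4]]].
    fold delta in h3, h4. fold D in h3.
    split. rewrite <- h3. apply pow2_ge_0. split; auto.
    destruct (root_cases delta p (pA x) h3) as [e|e]; [left|right]; split; auto;
      unfold E1, E2; rewrite h4, e; auto. }
  assert (pE0s : delta * p < 1 -> loc_asym_stable beta mu p E0).
  { intros h. apply stable_E0; auto. rewrite hbd. nra. }
  assert (pE0u : 1 < delta * p -> unstable beta mu p E0).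
  { intros h. apply unst_E0; auto. rewrite hbd. nra. }
  assert (stab1 : 0 < D -> 0 < A_plus delta p -> loc_asym_stable beta mu p E1).
  { intros hD ha. unfold E1, delta. apply stable_E; auto. apply QP. lra.
    fold delta. rewrite HAp, Hc. rewrite <- (Hq2 ltac:(lra)).
    assert (0 < q) by (unfold q; apply sqrt_lt_R0; auto). 
    replace ((delta * (1 + q) / 2) ^ 2) with (delta ^ 2 * (1 + q) ^ 2 / 4) by field. 
    unfold Rdiv. apply Rmult_lt_compat_r. lra. apply Rmult_lt_compat_l. nra. nra. }
  assert (endE1 : 0 < D -> 0 < A_plus delta p -> p * delta <= delta * A_plus delta p + 1 -> endemic beta mu p E1).
  { intros hD ha hs. unfold E1, delta. apply endemic_bwd; auto. apply (S1_nonneg beta mu p); auto. apply QP; lra. apply QP; lra. }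
  assert (endE2 : 0 < D -> 0 < A_minus delta p -> p * delta <= delta * A_minus delta p + 1 -> endemic beta mu p E2).
  { intros hD ha hs. unfold E2, delta. apply endemic_bwd; auto. apply (S1_nonneg beta mu p); auto. apply QM; lra. apply QM; lra. }
  split.
  - intros hp2. split; [|split].
    +
      intros hdl. assert (hDn : D < 0) by nra. split.
      * intros x Hx. destruct (FWD x Hx) as [h _]. lra.
      * apply pE0s. nra.
    +
      intros [hdl hdr].
      assert (hpd : delta * p < 1).
      { apply Rmult_lt_compat_r with (r := p) in hdr; auto. replace (1 / p * p) with 1 in hdr by (field; lra). lra. }
      assert (hD : 0 < D) by nra.
      assert (hqq : q ^ 2 = D) by (apply Hq2; lra).
      assert (hqp : 0 < q) by (unfold q; apply sqrt_lt_R0; auto).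
      assert (hq1 : q < 1) by (apply (sq_gt 1 q); [lra|]; assert (D < 1) by nra; nra).
      assert (hAm : 0 < A_minus delta p).
      { apply (posA _ _ HAm). assert (delta * q < delta - 2).
        { apply sq_gt. nra. replace ((delta * q) ^ 2) with (delta ^ 2 * q ^ 2) by ring. rewrite hqq. nra. }
        nra. }
      assert (hAp : 0 < A_plus delta p) by (apply (posA _ _ HAp); nra).
      split; [|split; [|split; [|split]]].
      * intros x. split.
        -- intros Hx. destruct (FWD x Hx) as [_ [_ [[e _]|[e _]]]]; auto.
        -- intros [e|e]; rewrite e; [apply endE1 | apply endE2]; auto; nra.
      * intros e. assert (pA E1 = pA E2) by (rewrite e; auto). unfold E1, E2, Epoint, pA in H; simpl in H.
        assert (2 * A_plus delta p - 1 + 2 / delta = 2 * A_minus delta p - 1 + 2 / delta) by (rewrite H; auto).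
        rewrite HAp', HAm' in H0. lra.
      * apply stab1; auto.
      * unfold E2, delta. apply unstable_E; auto.
        -- apply (S1_nonneg beta mu p); auto. apply QM; lra. fold delta. nra.
        -- apply QM; lra.
        -- fold delta. rewrite HAm, Hc, <- hqq.
           replace ((delta * (1 - q) / 2) ^ 2) with (delta ^ 2 * (1 - q) ^ 2 / 4) by field.
           unfold Rdiv. apply Rmult_lt_compat_r. lra. apply Rmult_lt_compat_l. nra. nra.
      * apply pE0s; auto.
    +
      intros hdl.
      assert (hpd : 1 <= delta * p).
      { apply Rmult_le_compat_r with (r := p) in hdl; [|lra]. replace (1 / p * p) with 1 in hdl by (field; lra). lra. }
      assert (hd2 : 2 < delta) by nra.
      assert (hD : 0 < D).
      { assert (delta - 4 * (1 - p) > 0).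
        { assert (h4 : 4 * (1 - p) * p < 1) by nra. nra. }
        nra. }
      assert (hqq : q ^ 2 = D) by (apply Hq2; lra).
      assert (hqp : 0 < q) by (unfold q; apply sqrt_lt_R0; auto).
      assert (hAp : 0 < A_plus delta p) by (apply (posA _ _ HAp); nra).
      assert (hAm : A_minus delta p <= 0).
      { apply (nposA _ _ HAm). assert (delta - 2 <= delta * q).
        { destruct (Rle_or_lt (delta - 2) (delta * q)); auto.
          assert ((delta * q) ^ 2 < (delta - 2) ^ 2) by (apply sq_mono; nra).
          replace ((delta * q) ^ 2) with (delta ^ 2 * q ^ 2) in H0 by ring. rewrite hqq in H0. nra. }
        nra. }
      split; [|split].
      * intros x. split.
        -- intros Hx. destruct (FWD x Hx) as [_ [hpos [[e _]|[_ e]]]]; auto. lra.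
        -- intros e. rewrite e. apply endE1; auto. rewrite HAp. nra.
      * apply stab1; auto.
      * intros h. apply pE0u.
        apply Rmult_lt_compat_r with (r := p) in h; [|lra]. replace (1 / p * p) with 1 in h by (field; lra). lra.
  - intros hp2. split; [|split].
    +
      intros hdl x Hx.
      assert (hpd : delta * p <= 1).
      { apply Rmult_le_compat_r with (r := p) in hdl; [|lra]. replace (1 / p * p) with 1 in hdl by (field; lra). lra. }
      destruct (FWD x Hx) as [hD [hpos H]].
      assert (hqq : q ^ 2 = D) by (apply Hq2; lra).
      assert (hAp : A_plus delta p <= 0).
      { apply (nposA _ _ HAp). assert (delta * q <= 2 - delta).
        { destruct (Rle_or_lt (delta * q) (2 - delta)); auto.
          assert ((2 - delta) ^ 2 < (delta * q) ^ 2) by (apply sq_mono; nra).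
          replace ((delta * q) ^ 2) with (delta ^ 2 * q ^ 2) in H1 by ring. rewrite hqq in H1. nra. }
        nra. }
      assert (A_minus delta p <= A_plus delta p).
      { assert (delta * A_minus delta p <= delta * A_plus delta p) by nra. nra. }
      destruct H as [[_ e]|[_ e]]; lra.
    + intros hdl. apply pE0s.
      apply Rmult_lt_compat_r with (r := p) in hdl; [|lra]. replace (1 / p * p) with 1 in hdl by (field; lra). lra.
    +
      intros hdl.
      assert (hpd : 1 < delta * p).
      { apply Rmult_lt_compat_r with (r := p) in hdl; [|lra]. replace (1 / p * p) with 1 in hdl by (field; lra). lra. }
      assert (hD : 0 < D).
      { assert (delta - 4 * (1 - p) > 0) by nra. nra. }
      assert (hqq : q ^ 2 = D) by (apply Hq2; lra).
      assert (hqp : 0 < q) by (unfold q; apply sqrt_lt_R0; auto).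
      assert (hbig : (delta - 2) ^ 2 < (delta * q) ^ 2).
      { replace ((delta * q) ^ 2) with (delta ^ 2 * q ^ 2) by ring. rewrite hqq. nra. }
      assert (hAp : 0 < A_plus delta p).
      { apply (posA _ _ HAp). assert (2 - delta < delta * q) by (apply sq_gt; [nra|]; nra). nra. }
      assert (hAm : A_minus delta p < 0).
      { assert (delta - 2 < delta * q) by (apply sq_gt; [nra|]; nra).
        assert (delta * A_minus delta p < 0) by nra. nra. }
      split; [|split].
      * intros x. split.
        -- intros Hx. destruct (FWD x Hx) as [_ [hpos [[e _]|[_ e]]]]; auto. lra.
        -- intros e. rewrite e. apply endE1; auto. rewrite HAp.
           assert (2 * p - 1 < q).
           { apply sq_gt. lra. rewrite hqq. nra. }
           nra.
      * apply stab1; auto.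
      * apply pE0u; auto.
Qed.
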